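(* Assume $d_Y\ge2$. Let $\mathcal T$ be the set of $\mathcal Y$-valued transition matrices on $\mathcal X$, viewed as a convex subset of $\mathbb R^{\mathcal Y\times\mathcal X\times\mathcal X}$ with nonempty interior in its affine hull, equipped with the Lebesgue measure of that affine hull, and let $\Delta_{\mathcal X}$ be the probability simplex on $\mathcal X$ with its Lebesgue measure. Then for almost every $(\vec W,P)\in\mathcal T\times\Delta_{\mathcal X}$ one has $K_{\vec W}=\{0\}$ and $\mathcal V^{k_{(P,\vec W)}}(P)=\mathcal V_{\mathcal X}$. Moreover, for almost every $\vec W\in\mathcal T$ (such $\vec W$ being irreducible almost everywhere) one has $K_{\vec W}=\{0\}$ and $\mathcal V^{k_{(P_{\vec W},\vec W)}}(P_{\vec W})=\mathcal V_{\mathcal X}$.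
   Context: Let $\mathcal X=\{1,\dots,d\}$, $\mathcal Y=\{1,\dots,d_Y\}$ be finite sets, $\mathcal V_{\mathcal X}=\mathbb R^{\mathcal X}$ (column vectors; distributions are regarded as vectors in it), $u_{\mathcal X}$ the all-ones vector. A $\mathcal Y$-valued transition matrix on $\mathcal X$ is a family $\vec W=(W_y)_{y\in\mathcal Y}$ of $d\times d$ nonnegative matrices $W_y(x|x')$ ($x$ row, $x'$ column) with $|\vec W|:=\sum_yW_y$ column-stochastic; it is irreducible if $|\vec W|$ is, and then $P_{\vec W}$ is the unique probability vector with $|\vec W|P_{\vec W}=P_{\vec W}$. For $k\ge1$, $P^k[\vec W]:\mathcal V_{\mathcal X}\to\mathbb R^{\mathcal Y^k}$, $(P^k[\vec W]v)(y_k,\dots,y_1)=u_{\mathcal X}^TW_{y_k}\cdots W_{y_1}v$. $k_{\vec W}$ is the least $k_0\ge1$ with $\bigcap_{k\ge1}\operatorname{Ker}P^k[\vec W]=\operatorname{Ker}P^{k_0}[\vec W]$; $K_{\vec W}:=\operatorname{Ker}P^{k_{\vec W}}[\vec W]$; $[v]$ is the class of $v$ in $\mathcal V_{\mathcal X}/K_{\vec W}$. For a distribution $P$ and $k\ge0$, $\mathcal V^k(P)$ is the subspace of $\mathcal V_{\mathcal X}/K_{\vec W}$ spanned by $[W_{y_{k'}}\cdots W_{y_1}P]$, $0\le k'\le k$, $y_i\in\mathcal Y$. $k_{(P,\vec W)}$ is the least $k_1\ge1$ with $\bigcup_{k\ge1}\mathcal V^k(P)=\mathcal V^{k_1}(P)$.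 (When $K_{\vec W}=\{0\}$ the quotient is identified with $\mathcal V_{\mathcal X}$.) *)

(* Defs.v *)
From Stdlib Require Import Reals List Arith Bool.
Import ListNotations.
Open Scope R_scope.

(* Indices: X = {0,...,d-1}, Y = {0,...,dY-1} (0-based instead of 1-based). *)

Definition rsum (n : nat) (f : nat -> R) : R :=
  fold_right Rplus 0 (map f (seq 0 n)).

(** A Y-valued transition matrix: W y x x' = W_y(x|x'). *)
Definition is_trans (d dY : nat) (W : nat -> nat -> nat -> R) : Prop :=
  (forall y x x', (y < dY)%nat -> (x < d)%nat -> (x' < d)%nat -> 0 <= W y x x') /\
  (forall x', (x' < d)%nat -> rsum dY (fun y => rsum d (fun x => W y x x')) = 1).

Definition is_prob (d : nat) (P : nat -> R) : Prop :=
  (forall x, (x < d)%nat -> 0 <= P x) /\ rsum d P = 1.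

Definition sumW (dY : nat) (W : nat -> nat -> nat -> R) : nat -> nat -> R :=
  fun x x' => rsum dY (fun y => W y x x').

Fixpoint mpow (d : nat) (M : nat -> nat -> R) (n : nat) : nat -> nat -> R :=
  match n with
  | O => fun i j => if Nat.eqb i j then 1 else 0
  | S n => fun i j => rsum d (fun k => M i k * mpow d M n k j)
  end.

Definition irreducible (d : nat) (M : nat -> nat -> R) : Prop :=
  forall i j, (i < d)%nat -> (j < d)%nat -> exists n, 0 < mpow d M n i j.

Definition stationary (d dY : nat) (W : nat -> nat -> nat -> R) (P : nat -> R) : Prop :=
  is_prob d P /\
  forall x, (x < d)%nat -> rsum d (fun x' => sumW dY W x x' * P x') = P x.

Definition Wapp (d : nat) (W : nat -> nat -> nat -> R) (y : nat) (v : nat -> R) : nat -> R :=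
  fun x => rsum d (fun x' => W y x x' * v x').

(** word [y1; ...; yk] |-> W_{yk} ... W_{y1} v *)
Fixpoint wordapp (d : nat) (W : nat -> nat -> nat -> R) (ys : list nat) (v : nat -> R)
  : nat -> R :=
  match ys with
  | [] => v
  | y :: ys => wordapp d W ys (Wapp d W y v)
  end.

Definition word_ok (dY : nat) (ys : list nat) : Prop := Forall (fun y => (y < dY)%nat) ys.

(** v \in K_W.  By definition of k_W, K_W = Ker P^{k_W} = \bigcap_{k>=1} Ker P^k,
    and v \in Ker P^k iff u^T W_{yk}...W_{y1} v = 0 for all words of length k. *)
Definition inK (d dY : nat) (W : nat -> nat -> nat -> R) (v : nat -> R) : Prop :=
  forall ys, ys <> [] -> word_ok dY ys -> rsum d (wordapp d W ys v) = 0.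

Definition trivK (d dY : nat) (W : nat -> nat -> nat -> R) : Prop :=
  forall v, inK d dY W v -> forall x, (x < d)%nat -> v x = 0.

Definition comb (d : nat) (W : nat -> nat -> nat -> R) (P : nat -> R)
  (l : list (R * list nat)) : nat -> R :=
  fun x => fold_right (fun cw acc => fst cw * wordapp d W (snd cw) P x + acc) 0 l.

(** By definition of k_(P,W),
    V^{k_(P,W)}(P) = \bigcup_k V^k(P), the span in V_X/K_W of all classes
    [W_{yk'}...W_{y1} P]; it is everything iff every v is, modulo K_W,
    a finite linear combination of such vectors. *)
Definition fullV (d dY : nat) (W : nat -> nat -> nat -> R) (P : nat -> R) : Prop :=
  forall v : nat -> R, exists l : list (R * list nat),
    Forall (fun cw => word_ok dY (snd cw)) l /\
    inK d dY W (fun x => v x - comb d W P l x).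

(* A point is a function z : I -> R; only coordinates in the finite list idx matter. *)
Definition vol {I : Type} (idx : list I) (a b : I -> R) : R :=
  fold_right Rmult 1 (map (fun i => b i - a i) idx).

Definition null_set {I : Type} (idx : list I) (S : (I -> R) -> Prop) : Prop :=
  forall eps, 0 < eps -> exists a b : nat -> I -> R,
    (forall k i, In i idx -> a k i <= b k i) /\
    (forall z, S z -> exists k, forall i, In i idx -> a k i <= z i <= b k i) /\
    (forall N, sum_f_R0 (fun k => vol idx (a k) (b k)) N < eps).

Definition agree {I : Type} (idx : list I) (z z' : I -> R) : Prop :=
  forall i, In i idx -> z i = z' i.

(* Affine coordinates on the affine hull of T: all entries W y x x' except
   (y,x) = (0,0) (the entry W 0 0 x' is determined by column-stochasticity).
   This is an affine isomorphism from aff(T) onto R^(dY*d*d - d), so Lebesgue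
   measure on aff(T) corresponds (up to a constant) to Lebesgue measure in these
   coordinates; likewise P 1..P (d-1) for the simplex. *)
Definition W_idx (d dY : nat) : list (nat * nat * nat) :=
  flat_map (fun y => flat_map (fun x => flat_map (fun x' =>
     if (Nat.eqb y 0 && Nat.eqb x 0)%bool then [] else [(y, x, x')])
     (seq 0 d)) (seq 0 d)) (seq 0 dY).

Definition W_coords (W : nat -> nat -> nat -> R) : nat * nat * nat -> R :=
  fun t => match t with (y, x, x') => W y x x' end.

Definition P_idx (d : nat) : list nat := seq 1 (d - 1).

Definition pair_idx (d dY : nat) : list ((nat * nat * nat) + nat) :=
  map inl (W_idx d dY) ++ map inr (P_idx d).

Definition pair_coords (W : nat -> nat -> nat -> R) (P : nat -> R)
  : (nat * nat * nat) + nat -> R :=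
  fun t => match t with inl t => W_coords W t | inr x => P x end.

(* Main.v *)
Require Import Defs.
From Stdlib Require Import Reals List Arith Bool.
From Stdlib Require Import Lra Lia ClassicalEpsilon Classical FunctionalExtensionality.
Open Scope R_scope.

From Stdlib Require Import Reals List Arith Bool Lra Lia.
Import ListNotations.
Open Scope R_scope.

Lemma Rabs_le_inv a b : Rabs a <= b -> -b <= a <= b.
Proof. intros H. pose proof (Rle_abs a). pose proof (Rle_abs (-a)). rewrite Rabs_Ropp in *. lra. Qed.

Lemma fold_Rplus_acc (l : list R) (a : R) : fold_right Rplus a l = Rplus (fold_right Rplus 0 l) a.
Proof. induction l; simpl; [lra|]. rewrite IHl. lra. Qed.

Section Expr.
Variable I : Type.
Variable dec : forall x y : I, {x = y} + {x <> y}.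

Inductive expr : Type :=
| EC (c : R) | EV (i : I) | EA (a b : expr) | EM (a b : expr).

Fixpoint eval (z : I -> R) (e : expr) : R :=
  match e with
  | EC c => c | EV i => z i
  | EA a b => eval z a + eval z b
  | EM a b => eval z a * eval z b
  end.

Fixpoint occurs (t : I) (e : expr) : Prop :=
  match e with
  | EC _ => False | EV i => i = t
  | EA a b => occurs t a \/ occurs t b
  | EM a b => occurs t a \/ occurs t b
  end.

Definition upd (z : I -> R) (t : I) (s : R) : I -> R :=
  fun j => if dec j t then s else z j.

Fixpoint deg (t : I) (e : expr) : nat :=
  match e with
  | EC _ => 0%nat | EV i => if dec i t then 1%nat else 0%nat
  | EA a b => Nat.max (deg t a) (deg t b)
  | EM a b => (deg t a + deg t b)%nat
  end.

Fixpoint deriv (t : I) (e : expr) : expr :=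
  match e with
  | EC _ => EC 0 | EV i => if dec i t then EC 1 else EC 0
  | EA a b => EA (deriv t a) (deriv t b)
  | EM a b => EA (if Nat.eqb (deg t a) 0 then EC 0 else EM (deriv t a) b)
                 (if Nat.eqb (deg t b) 0 then EC 0 else EM a (deriv t b))
  end.

Fixpoint subst (t : I) (c : R) (e : expr) : expr :=
  match e with
  | EC c' => EC c' | EV i => if dec i t then EC c else EV i
  | EA a b => EA (subst t c a) (subst t c b)
  | EM a b => EM (subst t c a) (subst t c b)
  end.

Fixpoint Bnd (e : expr) : R :=
  match e with
  | EC c => Rabs c | EV _ => 1
  | EA a b => Bnd a + Bnd b
  | EM a b => Bnd a * Bnd b
  end.

Fixpoint Lip (e : expr) : R :=
  match e with
  | EC c => 0 | EV _ => 1
  | EA a b => Lip a + Lip b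
  | EM a b => Bnd a * Lip b + Bnd b * Lip a
  end.

Definition inbox (idx : list I) (z : I -> R) : Prop :=
  forall i, In i idx -> -1 <= z i <= 1.

Lemma eval_ext e z z' : (forall i, occurs i e -> z i = z' i) -> eval z e = eval z' e.
Proof. induction e; simpl; intros H; auto; try (rewrite IHe1, IHe2; auto). Qed.

Lemma deg0_noocc t e : deg t e = 0%nat -> ~ occurs t e.
Proof.
  induction e; simpl; auto.
  - destruct (dec i t); [discriminate | auto].
  - intros H [H1|H1]; [apply IHe1|apply IHe2]; auto; lia.
  - intros H [H1|H1]; [apply IHe1|apply IHe2]; auto; lia.
Qed.

Lemma occ_deg t e : occurs t e -> (1 <= deg t e)%nat.
Proof.
  intros H. destruct (Nat.eq_dec (deg t e) 0) as [E|E].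
  - exfalso; exact (deg0_noocc t e E H).
  - lia.
Qed.

Lemma eval_upd_noocc t e z s : ~ occurs t e -> eval (upd z t s) e = eval z e.
Proof.
  intros H. apply eval_ext. intros i Hi. unfold upd. destruct (dec i t); auto.
  subst; contradiction.
Qed.

Lemma deg_deriv t e : (deg t (deriv t e) <= deg t e - 1)%nat.
Proof.
  induction e; simpl; try lia.
  - destruct (dec i t); simpl; lia.
  - destruct (Nat.eqb_spec (deg t e1) 0); destruct (Nat.eqb_spec (deg t e2) 0); simpl; lia.
Qed.

Lemma occ_deriv t e i : occurs i (deriv t e) -> occurs i e.
Proof.
  induction e; simpl; auto.
  - destruct (dec i0 t); simpl; tauto.
  - tauto.
  - destruct (Nat.eqb (deg t e1) 0); destruct (Nat.eqb (deg t e2) 0); simpl; tauto.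
Qed.

Lemma eval_subst t c e z : eval z (subst t c e) = eval (upd z t c) e.
Proof.
  induction e; simpl; auto; try (rewrite IHe1, IHe2; auto).
  unfold upd. destruct (dec i t); simpl; auto.
Qed.

Lemma occ_subst t c e i : occurs i (subst t c e) -> occurs i e /\ i <> t.
Proof.
  induction e; simpl; try tauto.
  destruct (dec i0 t); simpl; [tauto|]. intros; subst; auto.
Qed.

Lemma derivable_const_fun (f : R -> R) c x : (forall s, f s = c) -> derivable_pt_lim f x 0.
Proof.
  intros H. replace f with (fun _ : R => c).
  - apply derivable_pt_lim_const.
  - apply FunctionalExtensionality.functional_extensionality; intros; auto.
Qed.

Lemma deriv_correct t e z s0 :
  derivable_pt_lim (fun s => eval (upd z t s) e) s0 (eval (upd z t s0) (deriv t e)).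
Proof.
  induction e; simpl.
  - apply derivable_const_fun with c; auto.
  - destruct (dec i t) as [E|E]; simpl.
    + replace (fun s => upd z t s i) with (fun s : R => s).
      * apply derivable_pt_lim_id.
      * apply FunctionalExtensionality.functional_extensionality; intros; unfold upd; subst;
        destruct (dec t t); tauto.
    + apply derivable_const_fun with (z i). intros; unfold upd; destruct (dec i t); tauto.
  - apply (derivable_pt_lim_plus (fun s => eval (upd z t s) e1) (fun s => eval (upd z t s) e2)); auto.
  - pose proof (derivable_pt_lim_mult (fun s => eval (upd z t s) e1) (fun s => eval (upd z t s) e2) s0 _ _ IHe1 IHe2) as H.
    match goal with |- derivable_pt_lim ?f _ ?l => replace l with
        (eval (upd z t s0) (deriv t e1) * eval (upd z t s0) e2 + eval (upd z t s0) e1 * eval (upd z t s0) (deriv t e2)) end.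
    + exact H.
    + assert (D1: deg t e1 = 0%nat -> eval (upd z t s0) (deriv t e1) = 0).
      { intros Hd. apply (uniqueness_limite (fun s => eval (upd z t s) e1) s0); [apply IHe1|].
        apply derivable_const_fun with (eval z e1). intros; apply eval_upd_noocc, deg0_noocc; auto. }
      assert (D2: deg t e2 = 0%nat -> eval (upd z t s0) (deriv t e2) = 0).
      { intros Hd. apply (uniqueness_limite (fun s => eval (upd z t s) e2) s0); [apply IHe2|].
        apply derivable_const_fun with (eval z e2). intros; apply eval_upd_noocc, deg0_noocc; auto. }
      destruct (Nat.eqb_spec (deg t e1) 0); destruct (Nat.eqb_spec (deg t e2) 0); simpl;
        try rewrite D1 by auto; try rewrite D2 by auto; ring.
Qed.

Definition vin (idx : list I) (e : expr) := forall i, occurs i e -> In i idx.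

Lemma Bnd_nonneg e : 0 <= Bnd e.
Proof. induction e; simpl; try lra. apply Rabs_pos. apply Rmult_le_pos; auto. Qed.

Lemma Bnd_ok idx e z : vin idx e -> inbox idx z -> Rabs (eval z e) <= Bnd e.
Proof.
  unfold vin; induction e; simpl; intros Hv Hz.
  - lra.
  - specialize (Hz i (Hv i eq_refl)). apply Rabs_le; lra.
  - eapply Rle_trans; [apply Rabs_triang|]. apply Rplus_le_compat; [apply IHe1|apply IHe2]; auto.
  - rewrite Rabs_mult. apply Rmult_le_compat; try apply Rabs_pos; [apply IHe1|apply IHe2]; auto.
Qed.

Lemma Lip_nonneg e : 0 <= Lip e.
Proof.
  induction e; simpl; try lra.
  pose proof (Bnd_nonneg e1); pose proof (Bnd_nonneg e2).
  apply Rplus_le_le_0_compat; apply Rmult_le_pos; auto.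
Qed.

Lemma Lip_ok idx e z z' eta : vin idx e -> inbox idx z -> inbox idx z' ->
  (forall i, In i idx -> Rabs (z i - z' i) <= eta) ->
  Rabs (eval z e - eval z' e) <= Lip e * eta.
Proof.
  intros Hv Hz Hz' Hd. unfold vin in Hv. induction e; simpl in *.
  - rewrite Rminus_diag, Rabs_R0; lra.
  - rewrite Rmult_1_l. apply Hd, Hv; auto.
  - replace (eval z e1 + eval z e2 - (eval z' e1 + eval z' e2)) with
      ((eval z e1 - eval z' e1) + (eval z e2 - eval z' e2)) by ring.
    eapply Rle_trans; [apply Rabs_triang|]. rewrite Rmult_plus_distr_r.
    apply Rplus_le_compat; [apply IHe1|apply IHe2]; auto.
  - assert (V1: vin idx e1) by (intros i Hi; apply Hv; auto).
    assert (V2: vin idx e2) by (intros i Hi; apply Hv; auto).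
    replace (eval z e1 * eval z e2 - eval z' e1 * eval z' e2) with
      (eval z e1 * (eval z e2 - eval z' e2) + eval z' e2 * (eval z e1 - eval z' e1)) by ring.
    eapply Rle_trans; [apply Rabs_triang|]. rewrite !Rabs_mult.
    rewrite Rmult_plus_distr_r, !Rmult_assoc.
    apply Rplus_le_compat; apply Rmult_le_compat; try apply Rabs_pos.
    + apply (Bnd_ok idx); auto.
    + apply IHe2; auto.
    + apply (Bnd_ok idx); auto.
    + apply IHe1; auto.
Qed.

Lemma inbox_upd idx z t s : inbox idx z -> -1 <= s <= 1 -> inbox idx (upd z t s).
Proof. intros H Hs i Hi. unfold upd. destruct (dec i t); auto. Qed.

Lemma MVT_expr idx t e z s1 s2 : inbox idx z -> -1 <= s1 <= 1 -> -1 <= s2 <= 1 ->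
  exists xi, -1 <= xi <= 1 /\ Rabs (xi - s1) <= Rabs (s2 - s1) /\
    eval (upd z t s2) e - eval (upd z t s1) e = eval (upd z t xi) (deriv t e) * (s2 - s1).
Proof.
  intros Hz H1 H2.
  destruct (Rtotal_order s1 s2) as [L|[E|L]].
  - destruct (MVT_cor2 (fun s => eval (upd z t s) e) (fun s => eval (upd z t s) (deriv t e)) s1 s2 L)
      as [c [Hc1 Hc2]].
    { intros; apply deriv_correct. }
    exists c. split; [lra|]. split; [rewrite !Rabs_right; lra|]. auto.
  - subst. exists s2. split; auto. split; [rewrite Rminus_diag, Rabs_R0; lra|]. ring.
  - destruct (MVT_cor2 (fun s => eval (upd z t s) e) (fun s => eval (upd z t s) (deriv t e)) s2 s1 L)
      as [c [Hc1 Hc2]].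
    { intros; apply deriv_correct. }
    exists c. split; [lra|]. split; [rewrite !Rabs_left; lra|].
    replace (eval (upd z t s2) e - eval (upd z t s1) e) with (- (eval (upd z t s1) e - eval (upd z t s2) e)) by ring.
    rewrite Hc1. ring.
Qed.

End Expr.

From Stdlib Require Import Reals List Arith Bool Lra Lia ClassicalEpsilon Classical.
Import ListNotations.
Open Scope R_scope.

Section Boxes.
Variable I : Type.
Variable dec : forall x y : I, {x = y} + {x <> y}.

Definition box := ((I -> R) * (I -> R))%type.
Definition wfb (idx : list I) (b : box) := forall i, In i idx -> fst b i <= snd b i.
Definition inb (idx : list I) (b : box) (z : I -> R) := forall i, In i idx -> fst b i <= z i <= snd b i.
Definition volb (idx : list I) (b : box) := vol idx (fst b) (snd b).
Definition sumvol idx (bs : list box) := fold_right Rplus 0 (map (volb idx) bs).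
Definition fcov idx (S : (I -> R) -> Prop) eps :=
  exists bs, Forall (wfb idx) bs /\ sumvol idx bs < eps /\ forall z, S z -> exists b, In b bs /\ inb idx b z.
Definition fnull idx S := forall eps, 0 < eps -> fcov idx S eps.

Lemma vol_nonneg idx b : wfb idx b -> 0 <= volb idx b.
Proof.
  unfold wfb, volb, vol. destruct b as [a c]; simpl. induction idx; simpl; intros H; [lra|].
  apply Rmult_le_pos. specialize (H a0 (or_introl eq_refl)); lra. apply IHidx; auto.
Qed.

Lemma sumvol_app idx l1 l2 : sumvol idx (l1 ++ l2) = sumvol idx l1 + sumvol idx l2.
Proof. unfold sumvol; induction l1; simpl; [ring|]. rewrite IHl1; ring. Qed.

Lemma sumvol_nonneg idx l : Forall (wfb idx) l -> 0 <= sumvol idx l.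
Proof.
  induction 1; unfold sumvol in *; simpl; [lra|].
  pose proof (vol_nonneg idx x H). lra.
Qed.

Lemma sumvol_bound idx l V0 : (forall b, In b l -> volb idx b <= V0) -> sumvol idx l <= INR (length l) * V0.
Proof.
  induction l; unfold sumvol in *; cbn [length map fold_right]; intros H; [simpl; lra|].
  rewrite S_INR. pose proof (H a (or_introl eq_refl)).
  assert (fold_right Rplus 0 (map (volb idx) l) <= INR (length l) * V0) by (apply IHl; intros; apply H; simpl; auto).
  lra.
Qed.

Lemma fnull_sub idx (S1 S2 : (I -> R) -> Prop) : (forall z, S1 z -> S2 z) -> fnull idx S2 -> fnull idx S1.
Proof.
  intros H N eps He. destruct (N eps He) as [bs [H1 [H2 H3]]]. exists bs; repeat split; auto.
Qed.

Lemma fnull_union idx (S1 S2 : (I -> R) -> Prop) : fnull idx S1 -> fnull idx S2 ->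
  fnull idx (fun z => S1 z \/ S2 z).
Proof.
  intros N1 N2 eps He.
  destruct (N1 (eps/2)) as [b1 [W1 [V1 C1]]]; [lra|].
  destruct (N2 (eps/2)) as [b2 [W2 [V2 C2]]]; [lra|].
  exists (b1 ++ b2). split; [apply Forall_app; auto|]. split.
  - rewrite sumvol_app; lra.
  - intros z [Hz|Hz]; [destruct (C1 z Hz) as [b [Hb Hb']]|destruct (C2 z Hz) as [b [Hb Hb']]];
      exists b; split; auto; apply in_or_app; auto.
Qed.

Lemma fnull_empty idx (S : (I -> R) -> Prop) : (forall z, ~ S z) -> fnull idx S.
Proof.
  intros H eps He. exists []. split; [constructor|]. split; [unfold sumvol; simpl; lra|].
  intros z Hz; exfalso; eapply H; eauto.
Qed.

Lemma sum_nth_le (l : list R) N : Forall (fun x => 0 <= x) l ->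
  sum_f_R0 (fun k => nth k l 0) N <= fold_right Rplus 0 l.
Proof.
  revert N; induction l; intros N H.
  - simpl. induction N; simpl; [lra|]. destruct N; simpl in *; lra.
  - inversion H; subst. destruct N.
    + simpl. assert (0 <= fold_right Rplus 0 l).
      { clear -H3. induction H3; simpl; lra. }
      lra.
    + rewrite decomp_sum by lia. simpl. specialize (IHl N H3). lra.
Qed.

Lemma fnull_null idx S : idx <> [] -> fnull idx S -> null_set idx S.
Proof.
  intros Hne N eps He. destruct (N eps He) as [bs [W [V C]]].
  set (d0 := ((fun _ : I => 0), (fun _ : I => 0)) : box).
  exists (fun k => fst (nth k bs d0)), (fun k => snd (nth k bs d0)).
  split; [|split].
  - intros k i Hi. destruct (Nat.lt_ge_cases k (length bs)).
    + rewrite Forall_forall in W. apply W; auto. apply nth_In; auto.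
    + rewrite nth_overflow by auto. simpl; lra.
  - intros z Hz. destruct (C z Hz) as [b [Hb Hb']]. destruct (In_nth _ _ d0 Hb) as [k [Hk Hk']].
    exists k. rewrite Hk'. auto.
  - intros M. eapply Rle_lt_trans; [|apply V]. unfold sumvol.
    assert (E: forall k, vol idx (fst (nth k bs d0)) (snd (nth k bs d0)) = nth k (map (volb idx) bs) 0).
    { intros k. assert (volb idx d0 = 0).
      { unfold volb, vol; destruct idx; [congruence|]; simpl; ring. }
      rewrite <- H. rewrite map_nth. reflexivity. }
    replace (sum_f_R0 (fun k => vol idx (fst (nth k bs d0)) (snd (nth k bs d0))) M)
      with (sum_f_R0 (fun k => nth k (map (volb idx) bs) 0) M).
    + apply sum_nth_le. rewrite Forall_forall in *. intros x Hx.
      apply in_map_iff in Hx. destruct Hx as [b [<- Hb]]. apply vol_nonneg; auto.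
    + apply sum_eq. intros; rewrite E; auto.
Qed.

Definition updn (f : I -> nat) (i : I) (j : nat) : I -> nat := fun k => if dec k i then j else f k.

Fixpoint allcells (N : nat) (l : list I) : list (I -> nat) :=
  match l with
  | [] => [fun _ => 0%nat]
  | i :: l' => flat_map (fun f => map (fun j => updn f i j) (seq 0 N)) (allcells N l')
  end.

Lemma length_flat_map_const {A B} (g : A -> list B) (l : list A) K :
  (forall a, length (g a) = K) -> length (flat_map g l) = (length l * K)%nat.
Proof. intros H; induction l; simpl; auto. rewrite length_app, H, IHl. lia. Qed.

Lemma allcells_length N l : length (allcells N l) = Nat.pow N (length l).
Proof.
  induction l; simpl; auto. rewrite (length_flat_map_const _ _ N).
  - rewrite IHl. lia.
  - intros; rewrite length_map, length_seq; auto.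
Qed.

Lemma allcells_mem N l (g : I -> nat) : (forall i, In i l -> (g i < N)%nat) ->
  exists f, In f (allcells N l) /\ forall i, In i l -> f i = g i.
Proof.
  induction l; intros H; simpl.
  - exists (fun _ => 0%nat); split; auto. intros i [].
  - assert (Hl: forall i, In i l -> (g i < N)%nat) by (intros; apply H; simpl; auto).
    destruct (IHl Hl) as [f0 [Hf Hf']].
    exists (updn f0 a (g a)). split.
    + apply in_flat_map. exists f0; split; auto. apply in_map_iff. exists (g a); split; auto.
      apply in_seq. specialize (H a (or_introl eq_refl)). lia.
    + intros i Hi. unfold updn. destruct (dec i a); [subst; auto|].
      destruct Hi; [congruence|auto].
Qed.

Lemma nat_floor N y : (1 <= N)%nat -> 0 <= y <= INR N -> exists j, (j < N)%nat /\ INR j <= y <= INR j + 1.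
Proof.
  induction N; intros HN Hy; [lia|].
  destruct (Nat.eq_dec N 0) as [E|E].
  - subst. exists 0%nat. simpl in *. split; [lia|]. lra.
  - destruct (Rle_dec y (INR N)) as [L|L].
    + destruct IHN as [j [Hj Hj']]; [lia|lra|]. exists j; split; auto.
    + exists N. split; [lia|]. rewrite S_INR in Hy. lra.
Qed.

Lemma grid_idx N x : (1 <= N)%nat -> exists j, (j < N)%nat /\
  (-1 <= x <= 1 -> -1 + (2 / INR N) * INR j <= x <= -1 + (2 / INR N) * (INR j + 1)).
Proof.
  intros HN. assert (HNp: 0 < INR N) by (apply lt_0_INR; lia).
  destruct (Rle_dec (-1) x) as [L1|L1]; [destruct (Rle_dec x 1) as [L2|L2]|].
  - destruct (nat_floor N ((x + 1) * INR N / 2) HN) as [j [Hj [Hj1 Hj2]]].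
    { split. apply Rmult_le_pos; [|lra]. apply Rmult_le_pos; lra.
      apply (Rmult_le_reg_r 2); [lra|]. unfold Rdiv. rewrite Rmult_assoc, Rinv_l, Rmult_1_r by lra. nra. }
    exists j; split; auto. intros _.
    assert (x + 1 = 2 / INR N * ((x + 1) * INR N / 2)) by (field; lra).
    split.
    + assert (2 / INR N * INR j <= 2 / INR N * ((x + 1) * INR N / 2)).
      { apply Rmult_le_compat_l; auto. apply Rlt_le, Rdiv_lt_0_compat; lra. } lra.
    + assert (2 / INR N * ((x + 1) * INR N / 2) <= 2 / INR N * (INR j + 1)).
      { apply Rmult_le_compat_l; auto. apply Rlt_le, Rdiv_lt_0_compat; lra. } lra.
  - exists 0%nat; split; [lia|]. intros; lra.
  - exists 0%nat; split; [lia|]. intros; lra.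
Qed.

Definition notI (t : I) : I -> bool := fun i => if dec i t then false else true.

Definition gbox (t : I) (h : R) (f : I -> nat) (ct r : R) : box :=
  ((fun i => if dec i t then ct - r else -1 + h * INR (f i)),
   (fun i => if dec i t then ct + r else -1 + h * (INR (f i) + 1))).

Lemma gbox_vol idx t h f ct r : 0 <= h -> 0 <= 2 * r <= 1 -> In t idx ->
  volb idx (gbox t h f ct r) <= h ^ (length (filter (notI t) idx)) * (2 * r).
Proof.
  intros Hh Hr Ht. unfold volb, vol, gbox; simpl.
  assert (G: forall l, 0 <= fold_right Rmult 1 (map (fun i => (if dec i t then ct + r else -1 + h * (INR (f i) + 1)) -
       (if dec i t then ct - r else -1 + h * INR (f i))) l) <= h ^ length (filter (notI t) l) /\
       (In t l -> fold_right Rmult 1 (map (fun i => (if dec i t then ct + r else -1 + h * (INR (f i) + 1)) -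
       (if dec i t then ct - r else -1 + h * INR (f i))) l) <= h ^ length (filter (notI t) l) * (2 * r))).
  { induction l; simpl.
    - split; [lra|]. intros [].
    - destruct IHl as [[IH0 IH1] IH2].
      destruct (dec a t) as [E|E];
        [assert (Hn: notI t a = false) | assert (Hn: notI t a = true)];
        try (unfold notI; destruct (dec a t); congruence); simpl; rewrite Hn; simpl;
        destruct (dec a t); try congruence.
      + replace (ct + r - (ct - r)) with (2 * r) by ring.
        split; [split|].
        * apply Rmult_le_pos; lra.
        * assert (2 * r * fold_right Rmult 1 (map (fun i => (if dec i t then ct + r else -1 + h * (INR (f i) + 1)) -
           (if dec i t then ct - r else -1 + h * INR (f i))) l) <= 1 * h ^ length (filter (notI t) l)).
          { apply Rmult_le_compat; [lra|exact IH0|lra|exact IH1]. } lra.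
        * intros _. rewrite Rmult_comm. apply Rmult_le_compat; [exact IH0|lra|exact IH1|lra].
      + replace (-1 + h * (INR (f a) + 1) - (-1 + h * INR (f a))) with h by ring.
        split; [split|].
        * apply Rmult_le_pos; lra.
        * apply Rmult_le_compat_l; lra.
        * intros [H|H]; [congruence|]. rewrite Rmult_assoc. apply Rmult_le_compat_l; auto. }
  apply (proj2 (G idx)); auto.
Qed.

Section Cluster.
Variable idx : list I.
Variable t : I.
Hypothesis Ht : In t idx.

Definition incell (N K : nat) (f : I -> nat) (j : nat) (p : I -> R) : Prop :=
  (forall i, In i idx -> i <> t -> -1 + (2 / INR N) * INR (f i) <= p i <= -1 + (2 / INR N) * (INR (f i) + 1)) /\
  -1 + (2 / INR K) * INR j <= p t <= -1 + (2 / INR K) * (INR j + 1).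

Definition mkbox (S : (I -> R) -> Prop) N K r (f : I -> nat) (j : nat) : box :=
  match excluded_middle_informative (exists p, S p /\ incell N K f j p) with
  | left H => gbox t (2 / INR N) f ((proj1_sig (constructive_indefinite_description _ H)) t) r
  | right _ => gbox t (2 / INR N) f 0 0
  end.

Lemma cluster (N K : nat) (r : R) (S : (I -> R) -> Prop) :
  (1 <= N)%nat -> (1 <= K)%nat -> 0 <= 2 * r <= 1 ->
  (forall z, S z -> inbox I idx z) ->
  (forall p q, S p -> S q -> (forall i, In i idx -> i <> t -> Rabs (p i - q i) <= 2 / INR N) ->
      Rabs (p t - q t) <= 2 / INR K -> Rabs (p t - q t) <= r) ->
  exists bs, Forall (wfb idx) bs /\ sumvol idx bs <= 2 ^ (length idx) * INR K * (2 * r) /\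
    forall z, S z -> exists b, In b bs /\ inb idx b z.
Proof.
  intros HN HK Hr HS Hcl.
  assert (HNp: 0 < INR N) by (apply lt_0_INR; lia).
  assert (HKp: 0 < INR K) by (apply lt_0_INR; lia).
  assert (Hh: 0 <= 2 / INR N) by (apply Rlt_le, Rdiv_lt_0_compat; lra).
  set (l' := filter (notI t) idx).
  exists (flat_map (fun f => map (fun j => mkbox S N K r f j) (seq 0 K)) (allcells N l')).
  split; [|split].
  - apply Forall_forall. intros b Hb. apply in_flat_map in Hb. destruct Hb as [f [_ Hb]].
    apply in_map_iff in Hb. destruct Hb as [j [<- _]].
    intros i Hi. unfold mkbox. destruct excluded_middle_informative; unfold gbox; simpl;
      destruct (dec i t); nra.
  - eapply Rle_trans; [apply sumvol_bound with (V0 := (2 / INR N) ^ length l' * (2 * r))|].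
    + intros b Hb. apply in_flat_map in Hb. destruct Hb as [f [_ Hb]].
      apply in_map_iff in Hb. destruct Hb as [j [<- _]]. unfold mkbox.
      destruct excluded_middle_informative.
      * pose proof (gbox_vol idx t (2 / INR N) f (proj1_sig (constructive_indefinite_description
          (fun p => S p /\ incell N K f j p) e) t) r Hh Hr Ht). fold l' in H. exact H.
      * pose proof (gbox_vol idx t (2 / INR N) f 0 0 Hh ltac:(lra) Ht).
        assert (0 <= (2 / INR N) ^ length l') by (apply pow_le; auto).
        fold l' in H. nra.
    + rewrite (length_flat_map_const _ _ K) by (intros; rewrite length_map, length_seq; auto).
      rewrite allcells_length, mult_INR, pow_INR.
      replace (INR N ^ length l' * INR K * ((2 / INR N) ^ length l' * (2 * r))) with
        ((INR N * (2 / INR N)) ^ length l' * INR K * (2 * r)) by (rewrite Rpow_mult_distr; ring).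
      replace (INR N * (2 / INR N)) with 2 by (field; lra).
      assert (length l' <= length idx)%nat by (apply filter_length_le).
      assert (2 ^ length l' <= 2 ^ length idx) by (apply Rle_pow; lra || lia).
      assert (0 <= INR K * (2 * r)) by (apply Rmult_le_pos; lra).
      nra.
  - intros z Hz. pose proof (HS z Hz) as Hbz.
    set (g := fun i => proj1_sig (constructive_indefinite_description _ (grid_idx N (z i) HN))).
    assert (Hg: forall i, (g i < N)%nat /\ (-1 <= z i <= 1 ->
       -1 + 2 / INR N * INR (g i) <= z i <= -1 + 2 / INR N * (INR (g i) + 1))).
    { intros i. unfold g. destruct (constructive_indefinite_description _ _); simpl; auto. }
    destruct (allcells_mem N l' g) as [f [Hf Hf']]; [intros; apply Hg|].
    destruct (grid_idx K (z t) HK) as [j [Hj Hj']].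
    assert (Hin: incell N K f j z).
    { split.
      - intros i Hi Hit. rewrite Hf'. apply Hg, Hbz; auto.
        apply filter_In. split; auto. unfold notI; destruct (dec i t); congruence.
      - apply Hj', Hbz; auto. }
    exists (mkbox S N K r f j). split.
    + apply in_flat_map. exists f. split; auto. apply in_map_iff. exists j; split; auto.
      apply in_seq; lia.
    + unfold mkbox. destruct excluded_middle_informative as [e|n]; [|exfalso; apply n; eauto].
      destruct (constructive_indefinite_description _ e) as [p [Sp Cp]]; simpl.
      destruct Cp as [Cp1 Cp2]. destruct Hin as [Ci1 Ci2].
      assert (Hd: Rabs (p t - z t) <= r).
      { apply Hcl; auto.
        - intros i Hi Hit. specialize (Cp1 i Hi Hit). specialize (Ci1 i Hi Hit).
          apply Rabs_le. nra.
        - apply Rabs_le. nra. }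
      intros i Hi. unfold gbox; simpl. destruct (dec i t).
      * subst. apply Rabs_le_inv in Hd. lra.
      * split; apply Ci1; auto.
Qed.

End Cluster.

End Boxes.

From Stdlib Require Import Reals List Arith Bool Lra Lia ClassicalEpsilon Classical.
Import ListNotations.
Open Scope R_scope.

Arguments eval {I} z e. Arguments occurs {I} t e. Arguments inbox {I} idx z.
Arguments vin {I} idx e. Arguments Bnd {I} e. Arguments Lip {I} e.
Arguments fcov {I} idx S eps. Arguments fnull {I} idx S.

Section Key.
Variable I : Type.
Variable dec : forall x y : I, {x = y} + {x <> y}.
Variable idx : list I.

Lemma upd_same z t : forall i, upd I dec z t (z t) i = z i.
Proof. intros i; unfold upd; destruct (dec i t); subst; auto. Qed.

Lemma step_yes t (Ht : In t idx) e d1 (Hd1 : 0 < d1) eps (He : 0 < eps) :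
  vin idx e ->
  exists del, 0 < del /\ fcov idx (fun z => inbox idx z /\ Rabs (eval z e) <= del /\
                                        d1 < Rabs (eval z (deriv I dec t e))) eps.
Proof.
  intros V. set (de := deriv I dec t e).
  assert (V': vin idx de) by (intros i Hi; apply V, (occ_deriv I dec t); auto).
  set (L1 := Lip e). set (L2 := Lip de).
  assert (HL1: 0 <= L1) by apply Lip_nonneg. assert (HL2: 0 <= L2) by apply Lip_nonneg.
  set (A := 2 ^ length idx). assert (HA: 0 < A) by (apply pow_lt; lra).
  destruct (INR_archimed 1 (4 * (L2 + 1) / d1)) as [K HK]; [lra|]. rewrite Rmult_1_r in HK.
  assert (HK1: (1 <= K)%nat).
  { destruct K; [simpl in HK|lia]. assert (0 < 4 * (L2 + 1) / d1) by (apply Rdiv_lt_0_compat; lra). lra. }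
  assert (HKp: 0 < INR K) by (apply lt_0_INR; lia).
  set (m := Rmin 1 (eps / (4 * A * INR K))).
  assert (Hm0: 0 < m) by (apply Rmin_pos; [lra|apply Rdiv_lt_0_compat; [lra|]]; apply Rmult_lt_0_compat; lra).
  assert (Hm1: m <= 1) by apply Rmin_l. assert (Hm2: m <= eps / (4 * A * INR K)) by apply Rmin_r.
  set (tau := d1 * m / 13). assert (Htau: 0 < tau) by (unfold tau; apply Rdiv_lt_0_compat; nra).
  destruct (INR_archimed 1 (2 * (L1 + 1) / tau)) as [N HN]; [lra|]. rewrite Rmult_1_r in HN.
  assert (HN1: (1 <= N)%nat).
  { destruct N; [simpl in HN|lia]. assert (0 < 2 * (L1 + 1) / tau) by (apply Rdiv_lt_0_compat; lra). lra. }
  assert (HNp: 0 < INR N) by (apply lt_0_INR; lia).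
  set (h := 2 / INR N). set (c := 2 / INR K).
  assert (Hh: 0 < h) by (apply Rdiv_lt_0_compat; lra).
  assert (HLh: L1 * h <= tau).
  { unfold h. apply (Rmult_le_reg_r (INR N / tau)); [apply Rdiv_lt_0_compat; lra|].
    replace (L1 * (2 / INR N) * (INR N / tau)) with (2 * L1 / tau) by (field; lra).
    replace (tau * (INR N / tau)) with (INR N) by (field; lra).
    assert (2 * L1 / tau <= 2 * (L1 + 1) / tau) by (unfold Rdiv; apply Rmult_le_compat_r; [apply Rlt_le, Rinv_0_lt_compat; lra|lra]).
    lra. }
  assert (HLc: L2 * c <= d1 / 2).
  { unfold c. apply (Rmult_le_reg_r (INR K / d1)); [apply Rdiv_lt_0_compat; lra|].
    replace (L2 * (2 / INR K) * (INR K / d1)) with (2 * L2 / d1) by (field; lra).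
    replace (d1 / 2 * (INR K / d1)) with (INR K / 2) by (field; lra).
    assert (2 * L2 / d1 <= (4 * (L2 + 1) / d1) / 2).
    { replace ((4 * (L2 + 1) / d1) / 2) with (2 * (L2 + 1) / d1) by (field; lra).
      unfold Rdiv. apply Rmult_le_compat_r; [apply Rlt_le, Rinv_0_lt_compat; lra|lra]. }
    lra. }
  set (rho := 6 * tau / d1).
  exists tau. split; auto.
  destruct (cluster I dec idx t Ht N K rho (fun z => inbox idx z /\ Rabs (eval z e) <= tau /\ d1 < Rabs (eval z de)))
    as [bs [W [Vb C]]]; auto.
  - unfold rho, tau. split. apply Rmult_le_pos; [lra|]. apply Rlt_le, Rdiv_lt_0_compat; nra.
    replace (2 * (6 * (d1 * m / 13) / d1)) with (12 * m / 13) by (field; lra). lra.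
  - intros z [Hz _]; auto.
  - intros p q [Hp [Ep Dp]] [Hq [Eq Dq]] Hpq Hpqt.
    assert (Hpt: -1 <= p t <= 1) by (apply Hp; auto).
    assert (Hqt: -1 <= q t <= 1) by (apply Hq; auto).
    destruct (MVT_expr I dec idx t e p (p t) (q t) Hp Hpt Hqt) as [xi [Hxi [Hxi2 Hmvt]]].
    rewrite (eval_ext I e (upd I dec p t (p t)) p) in Hmvt by (intros; apply upd_same).
    fold de in Hmvt.
    assert (D1: Rabs (eval (upd I dec p t xi) de - eval p de) <= L2 * Rabs (xi - p t)).
    { apply (Lip_ok I idx); auto. apply inbox_upd; auto.
      intros i Hi. unfold upd. destruct (dec i t); [subst; lra|]. rewrite Rminus_diag, Rabs_R0. apply Rabs_pos. }
    assert (D2: Rabs (eval (upd I dec p t (q t)) e - eval q e) <= L1 * h).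
    { apply (Lip_ok I idx); auto. apply inbox_upd; auto.
      intros i Hi. unfold upd. destruct (dec i t); [subst; rewrite Rminus_diag, Rabs_R0; lra|]. apply Hpq; auto. }
    assert (Hxc: Rabs (xi - p t) <= c).
    { eapply Rle_trans; [apply Hxi2|]. rewrite Rabs_minus_sym; auto. }
    assert (D1': Rabs (eval (upd I dec p t xi) de - eval p de) <= d1 / 2).
    { eapply Rle_trans; [apply D1|]. eapply Rle_trans; [|apply HLc]. apply Rmult_le_compat_l; auto. }
    assert (G: d1 / 2 <= Rabs (eval (upd I dec p t xi) de)).
    { pose proof (Rabs_triang_inv (eval p de) (eval p de - eval (upd I dec p t xi) de)).
      replace (eval p de - (eval p de - eval (upd I dec p t xi) de)) with (eval (upd I dec p t xi) de) in H by ring.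
      rewrite Rabs_minus_sym in H. lra. }
    assert (G2: Rabs (eval (upd I dec p t (q t)) e - eval p e) <= 3 * tau).
    { pose proof (Rabs_triang (eval (upd I dec p t (q t)) e - eval q e) (eval q e - eval p e)).
      replace (eval (upd I dec p t (q t)) e - eval q e + (eval q e - eval p e)) with
        (eval (upd I dec p t (q t)) e - eval p e) in H by ring.
      assert (Rabs (eval q e - eval p e) <= Rabs (eval q e) + Rabs (eval p e)).
      { unfold Rminus. rewrite <- (Rabs_Ropp (eval p e)). apply Rabs_triang. }
      lra. }
    rewrite Hmvt, Rabs_mult in G2.
    rewrite Rabs_minus_sym. unfold rho.
    apply (Rmult_le_reg_l (d1 / 2)); [lra|].
    replace (d1 / 2 * (6 * tau / d1)) with (3 * tau) by (field; lra).
    eapply Rle_trans; [|apply G2]. apply Rmult_le_compat_r; [apply Rabs_pos|auto].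
  - exists bs. split; auto. split; auto.
    eapply Rle_lt_trans; [exact Vb|]. fold A. unfold rho, tau.
    replace (A * INR K * (2 * (6 * (d1 * m / 13) / d1))) with (A * INR K * m * (12 / 13)) by (field; lra).
    assert (A * INR K * m <= eps / 4).
    { replace (eps / 4) with (A * INR K * (eps / (4 * A * INR K))) by (field; lra).
      apply Rmult_le_compat_l; auto. apply Rmult_le_pos; lra. }
    lra.
Qed.

Lemma fcov_sub (S1 S2 : (I -> R) -> Prop) eps : (forall z, S1 z -> S2 z) -> fcov idx S2 eps -> fcov idx S1 eps.
Proof. intros H [bs [W [V C]]]. exists bs; repeat split; auto. Qed.

Lemma nil_case e : vin [] e -> (exists z0, inbox idx z0 /\ eval z0 e <> 0) ->
  forall eps, 0 < eps -> exists del, 0 < del /\ fcov idx (fun z => inbox idx z /\ Rabs (eval z e) <= del) eps.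
Proof.
  intros Hv [z0 [Hz0 Hne]] eps He. exists (Rabs (eval z0 e) / 2). split.
  - apply Rdiv_lt_0_compat; [apply Rabs_pos_lt; auto|lra].
  - exists []. split; [constructor|]. split; [unfold sumvol; simpl; lra|].
    intros z [Hz Hle]. exfalso. rewrite (eval_ext I e z z0) in Hle.
    + pose proof (Rabs_pos_lt _ Hne). lra.
    + intros i Hi. destruct (Hv i Hi).
Qed.

Lemma key n : forall V e, (length V <= n)%nat -> vin V e -> (forall i, In i V -> In i idx) ->
  (exists z0, inbox idx z0 /\ eval z0 e <> 0) ->
  forall eps, 0 < eps -> exists del, 0 < del /\ fcov idx (fun z => inbox idx z /\ Rabs (eval z e) <= del) eps.
Proof.
  induction n as [|n IHn]; intros V e HV Hv HVi Hnz.
  - destruct V; [|simpl in HV; lia]. apply nil_case; auto.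
  - destruct V as [|t V']; [apply nil_case; auto|].
    assert (Ht: In t idx) by (apply HVi; simpl; auto).
    assert (Inner: forall k e, (deg I dec t e <= k)%nat -> vin (t :: V') e ->
      (exists z0, inbox idx z0 /\ eval z0 e <> 0) ->
      forall eps, 0 < eps -> exists del, 0 < del /\ fcov idx (fun z => inbox idx z /\ Rabs (eval z e) <= del) eps).
    { induction k as [|k IHk]; intros e1 Hk Hv1 Hnz1 eps He.
      - apply (IHn V'); auto; [simpl in HV; lia| |intros; apply HVi; simpl; auto].
        intros i Hi. destruct (Hv1 i Hi); auto. subst. exfalso. apply (deg0_noocc I dec i e1); auto. lia.
      - destruct (Nat.eq_dec (deg I dec t e1) 0) as [D0|D0].
        + apply (IHn V'); auto; [simpl in HV; lia| |intros; apply HVi; simpl; auto].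
          intros i Hi. destruct (Hv1 i Hi); auto. subst. exfalso. apply (deg0_noocc I dec i e1); auto.
        + set (de := deriv I dec t e1).
          assert (Vd: vin (t :: V') de) by (intros i Hi; apply Hv1, (occ_deriv I dec t); auto).
          assert (Vidx: vin idx e1) by (intros i Hi; apply HVi, Hv1; auto).
          destruct (classic (exists z1, inbox idx z1 /\ eval z1 de <> 0)) as [Y|Nn].
          * destruct (IHk de) with (eps := eps / 2) as [d1 [Hd1 [bs1 [W1 [V1 C1]]]]]; auto; [|lra|].
            { pose proof (deg_deriv I dec t e1). fold de in H. lia. }
            destruct (step_yes t Ht e1 d1 Hd1 (eps / 2)) as [d2 [Hd2 [bs2 [W2 [V2 C2]]]]]; auto; [lra|].
            exists d2. split; auto. exists (bs1 ++ bs2). split; [apply Forall_app; auto|]. split.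
            { rewrite sumvol_app; lra. }
            intros z [Hz Hle]. destruct (Rle_dec (Rabs (eval z de)) d1) as [L|L].
            -- destruct (C1 z) as [b [Hb Hb']]; auto. exists b; split; auto. apply in_or_app; auto.
            -- destruct (C2 z) as [b [Hb Hb']]. { split; auto. split; auto. fold de. lra. }
               exists b; split; auto. apply in_or_app; auto.
          * assert (Z: forall z, inbox idx z -> eval z de = 0).
            { intros z Hz. apply NNPP. intros Hn. apply Nn. eauto. }
            set (e' := subst I dec t 0 e1).
            assert (Eq: forall z, inbox idx z -> eval z e' = eval z e1).
            { intros z Hz. unfold e'. rewrite eval_subst.
              assert (Hzt: -1 <= z t <= 1) by (apply Hz; auto).
              destruct (MVT_expr I dec idx t e1 z 0 (z t) Hz ltac:(lra) Hzt) as [xi [Hxi [_ Hm]]].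
              rewrite (eval_ext I e1 (upd I dec z t (z t)) z) in Hm by (intros; apply upd_same).
              fold de in Hm. rewrite Z in Hm by (apply inbox_upd; auto). lra. }
            destruct Hnz1 as [z0 [Hz0 Hne0]].
            destruct (IHn V' e') with (eps := eps) as [del [Hdel Hc]]; auto.
            { simpl in HV; lia. }
            { intros i Hi. unfold e' in Hi. apply occ_subst in Hi. destruct Hi as [Hi Hit].
              destruct (Hv1 i Hi); [congruence|auto]. }
            { intros; apply HVi; simpl; auto. }
            { exists z0. split; auto. rewrite Eq; auto. }
            exists del. split; auto. eapply fcov_sub; [|exact Hc].
            intros z [Hz Hle]. split; auto. rewrite Eq; auto. }
    apply (Inner (deg I dec t e)); auto.
Qed.

Lemma poly_fnull e : vin idx e -> (exists z0, inbox idx z0 /\ eval z0 e <> 0) ->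
  fnull idx (fun z => inbox idx z /\ eval z e = 0).
Proof.
  intros Hv Hnz eps He. destruct (key (length idx) idx e (le_n _) Hv (fun i H => H) Hnz eps He) as [del [Hd C]].
  eapply fcov_sub; [|exact C]. intros z [Hz E]. split; auto. rewrite E, Rabs_R0; lra.
Qed.

End Key.

From Stdlib Require Import Reals List Lra Lia Arith.
Import ListNotations.
Open Scope R_scope.

Lemma rsum_S n f : rsum (S n) f = rsum n f + f n.
Proof. unfold rsum. rewrite List.seq_S, List.map_app, fold_right_app. simpl. rewrite fold_Rplus_acc. ring. Qed.

Lemma rsum_ext n f g : (forall k, (k < n)%nat -> f k = g k) -> rsum n f = rsum n g.
Proof.
  induction n; intros H; [reflexivity|]. rewrite !rsum_S, IHn, H; auto; intros; apply H; lia.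
Qed.

Lemma rsum_plus n f g : rsum n (fun k => f k + g k) = rsum n f + rsum n g.
Proof. induction n; [unfold rsum; simpl; ring|]. rewrite !rsum_S, IHn. ring. Qed.

Lemma rsum_scal n c f : rsum n (fun k => c * f k) = c * rsum n f.
Proof. induction n; [unfold rsum; simpl; ring|]. rewrite !rsum_S, IHn. ring. Qed.

Lemma rsum_zero n f : (forall k, (k < n)%nat -> f k = 0) -> rsum n f = 0.
Proof. intros H. rewrite (rsum_ext n f (fun _ => 0)) by auto. induction n; [reflexivity|]. rewrite rsum_S, IHn; [ring|]. intros; apply H; lia. Qed.

Lemma rsum_comm n m f : rsum n (fun i => rsum m (fun j => f i j)) = rsum m (fun j => rsum n (fun i => f i j)).
Proof.
  induction n.
  - unfold rsum at 1. simpl. symmetry. apply rsum_zero. intros; reflexivity.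
  - rewrite rsum_S, IHn. rewrite <- rsum_plus. apply rsum_ext. intros; rewrite rsum_S; ring.
Qed.

Lemma rsum_delta n x f : (x < n)%nat -> rsum n (fun x' => (if Nat.eqb x x' then 1 else 0) * f x') = f x.
Proof.
  induction n; intros H; [lia|]. rewrite rsum_S.
  destruct (Nat.eq_dec x n).
  - subst. rewrite Nat.eqb_refl. rewrite rsum_zero; [ring|]. intros k Hk.
    destruct (Nat.eqb_spec n k); [lia|ring].
  - rewrite IHn by lia. destruct (Nat.eqb_spec x n); [lia|ring].
Qed.

Lemma rsum_delta' n x f : (x < n)%nat -> rsum n (fun x' => f x' * (if Nat.eqb x' x then 1 else 0)) = f x.
Proof.
  intros H. rewrite <- (rsum_delta n x f H). apply rsum_ext. intros k _.
  rewrite (Nat.eqb_sym k x). ring.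
Qed.

Section Sem.
Variables d dY : nat.

Fixpoint wm (W : nat -> nat -> nat -> R) (ys : list nat) : nat -> nat -> R :=
  match ys with
  | [] => fun x x' => if Nat.eqb x x' then 1 else 0
  | y :: ys => fun x x' => rsum d (fun k => wm W ys x k * W y k x')
  end.

Lemma wordapp_wm W ys : forall v x, (x < d)%nat ->
  wordapp d W ys v x = rsum d (fun x' => wm W ys x x' * v x').
Proof.
  induction ys as [|y ys IH]; intros v x Hx; simpl.
  - rewrite rsum_delta; auto.
  - rewrite IH by auto. unfold Wapp.
    transitivity (rsum d (fun x' => rsum d (fun x'' => wm W ys x x' * (W y x' x'' * v x''))));
      [apply rsum_ext; intros; rewrite <- rsum_scal; reflexivity|].
    rewrite rsum_comm. apply rsum_ext. intros k _.
    rewrite Rmult_comm, <- rsum_scal. apply rsum_ext. intros; ring.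
Qed.

Lemma wm_ext W1 W2 ys x x' : (forall y a b, (y < dY)%nat -> (a < d)%nat -> (b < d)%nat -> W1 y a b = W2 y a b) ->
  word_ok dY ys -> (x' < d)%nat -> wm W1 ys x x' = wm W2 ys x x'.
Proof.
  intros HW. revert x'. induction ys as [|y ys IH]; intros x' Hok Hx'; simpl; auto.
  inversion Hok; subst. apply rsum_ext. intros k Hk. rewrite IH, HW; auto.
Qed.

Lemma inK_zero W f : (forall x, (x < d)%nat -> f x = 0) -> inK d dY W f.
Proof.
  intros H ys _ _. apply rsum_zero. intros x Hx. rewrite wordapp_wm by auto.
  apply rsum_zero. intros; rewrite H; auto; ring.
Qed.

Definition tword (i : nat) : list nat := if Nat.eqb i (d - 1) then [0%nat] else repeat 1%nat (d - 1 - i).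

Lemma tword_ok i : (2 <= dY)%nat -> word_ok dY (tword i).
Proof.
  intros H. unfold tword, word_ok. destruct (Nat.eqb i (d-1)).
  - constructor; [lia|constructor].
  - induction (d - 1 - i)%nat; simpl; constructor; auto; lia.
Qed.

Lemma tword_ne i : (i < d)%nat -> tword i <> [].
Proof.
  intros H. unfold tword. destruct (Nat.eqb_spec i (d-1)); [discriminate|].
  replace (d - 1 - i)%nat with (S (d - 2 - i)) by lia. discriminate.
Qed.

Definition Rmat W (i j : nat) : R := rsum d (fun x => wm W (tword i) x j).

Lemma inK_rows W v : (2 <= dY)%nat -> inK d dY W v ->
  forall i, (i < d)%nat -> rsum d (fun j => Rmat W i j * v j) = 0.
Proof.
  intros HdY Hv i Hi. rewrite <- (Hv (tword i) (tword_ne i Hi) (tword_ok i HdY)).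
  unfold Rmat. transitivity (rsum d (fun j => rsum d (fun x => wm W (tword i) x j * v j))).
  - apply rsum_ext; intros; rewrite Rmult_comm, <- rsum_scal; apply rsum_ext; intros; ring.
  - rewrite rsum_comm. apply rsum_ext. intros; rewrite wordapp_wm; auto.
Qed.

Definition Mmat W (P : nat -> R) (j i : nat) : R := rsum d (fun x' => wm W (repeat 1%nat i) j x' * P x').

Lemma repeat_ok n : (2 <= dY)%nat -> word_ok dY (repeat 1%nat n).
Proof. intros H; unfold word_ok; induction n; simpl; constructor; auto; lia. Qed.

Lemma comb_map W P (c : nat -> R) s x :
  comb d W P (map (fun i => (c i, repeat 1%nat i)) s) x =
  fold_right Rplus 0 (map (fun i => c i * wordapp d W (repeat 1%nat i) P x) s).
Proof. induction s; simpl; auto. unfold comb in *. simpl. rewrite IHs. reflexivity. Qed.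

Lemma fullV_of_span W P : (2 <= dY)%nat ->
  (forall v : nat -> R, exists c : nat -> R, forall x, (x < d)%nat -> rsum d (fun i => Mmat W P x i * c i) = v x) ->
  fullV d dY W P.
Proof.
  intros HdY H v. destruct (H v) as [c Hc].
  exists (map (fun i => (c i, repeat 1%nat i)) (seq 0 d)). split.
  - apply Forall_forall. intros cw Hcw. apply in_map_iff in Hcw. destruct Hcw as [i [<- _]].
    apply repeat_ok; auto.
  - apply inK_zero. intros x Hx. rewrite comb_map. fold (rsum d (fun i => c i * wordapp d W (repeat 1%nat i) P x)).
    rewrite <- (Hc x Hx).
    assert (rsum d (fun i => Mmat W P x i * c i) = rsum d (fun i => c i * wordapp d W (repeat 1%nat i) P x)).
    { apply rsum_ext. intros i Hi. unfold Mmat. rewrite wordapp_wm by auto. ring. }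
    lra.
Qed.

Definition Bmat W (i j : nat) : R :=
  (if Nat.eqb i j then 1 else 0) + (if Nat.eqb i 0 then 1 else 0) - sumW dY W i j.

Lemma stationary_B W P : stationary d dY W P ->
  forall i, (i < d)%nat -> rsum d (fun x' => Bmat W i x' * P x') = if Nat.eqb i 0 then 1 else 0.
Proof.
  intros [[_ HP1] HP2] i Hi. unfold Bmat.
  transitivity (rsum d (fun x' => (if Nat.eqb i x' then 1 else 0) * P x') +
     ((if Nat.eqb i 0 then 1 else 0) * rsum d P - rsum d (fun x' => sumW dY W i x' * P x'))).
  - rewrite (rsum_ext d _ (fun x' => ((if Nat.eqb i x' then 1 else 0) * P x' +
        (if Nat.eqb i 0 then 1 else 0) * P x') + (-1) * (sumW dY W i x' * P x')))
      by (intros; ring).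
    rewrite !rsum_plus, !rsum_scal. ring.
  - rewrite rsum_delta, HP1, HP2 by auto. ring.
Qed.

Lemma irreducible_of_pos W : (forall x x', (x < d)%nat -> (x' < d)%nat -> 0 < sumW dY W x x') ->
  irreducible d (sumW dY W).
Proof.
  intros H i j Hi Hj. exists 1%nat. simpl. rewrite rsum_delta'; auto.
Qed.

End Sem.

From Stdlib Require Import Reals List Lra Lia Arith Bool.
Import ListNotations.
Open Scope R_scope.

Arguments EC {I} c. Arguments EV {I} i. Arguments EA {I} a b. Arguments EM {I} a b.
Arguments eval {I} z e. Arguments occurs {I} t e. Arguments vin {I} idx e.

Section ExprDefs.
Variables (d dY : nat) (I : Type) (vw : nat * nat * nat -> I) (vp : nat -> I).

Definition Esum n (f : nat -> expr I) : expr I := fold_right EA (EC 0) (map f (seq 0 n)).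

Lemma eval_Esum z n f : eval z (Esum n f) = rsum n (fun k => eval z (f k)).
Proof. unfold Esum, rsum. induction (seq 0 n); simpl; auto. rewrite IHl; auto. Qed.

Lemma occ_Esum i n f : occurs i (Esum n f) -> exists k, (k < n)%nat /\ occurs i (f k).
Proof.
  unfold Esum. intros H. assert (G: forall l, occurs i (fold_right EA (EC 0) (map f l)) -> exists k, In k l /\ occurs i (f k)).
  { induction l; simpl; [tauto|]. intros [H1|H1]; [exists a; auto|]. destruct (IHl H1) as [k [Hk Hk']]; eauto. }
  destruct (G _ H) as [k [Hk Hk']]. apply in_seq in Hk. exists k; split; auto; lia.
Qed.

Definition Went (y x x' : nat) : expr I :=
  if (Nat.eqb y 0 && Nat.eqb x 0)%bool then
    EA (EC 1) (EM (EC (-1)) (Esum d (fun a => Esum dY (fun b =>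
        if (Nat.eqb b 0 && Nat.eqb a 0)%bool then EC 0 else EV (vw (b, a, x'))))))
  else EV (vw (y, x, x')).

Definition Wof (z : I -> R) (y x x' : nat) : R := eval z (Went y x x').

Fixpoint Ewm (ys : list nat) : nat -> nat -> expr I :=
  match ys with
  | [] => fun x x' => EC (if Nat.eqb x x' then 1 else 0)
  | y :: ys => fun x x' => Esum d (fun k => EM (Ewm ys x k) (Went y k x'))
  end.

Lemma eval_Ewm z ys x x' : eval z (Ewm ys x x') = wm d (Wof z) ys x x'.
Proof.
  revert x'. induction ys; intros x'; simpl; auto. rewrite eval_Esum. apply rsum_ext.
  intros k _. simpl. rewrite IHys. reflexivity.
Qed.

Definition ER (i j : nat) : expr I := Esum d (fun x => Ewm (tword d i) x j).
Lemma eval_ER z i j : eval z (ER i j) = Rmat d (Wof z) i j.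
Proof. unfold ER, Rmat. rewrite eval_Esum. apply rsum_ext; intros; apply eval_Ewm. Qed.

Definition Pent (x : nat) : expr I :=
  if Nat.eqb x 0 then EA (EC 1) (EM (EC (-1)) (Esum d (fun x' => if Nat.eqb x' 0 then EC 0 else EV (vp x'))))
  else EV (vp x).
Definition Pof (z : I -> R) (x : nat) : R := eval z (Pent x).

Definition EM2 (j i : nat) : expr I := Esum d (fun x' => EM (Ewm (repeat 1%nat i) j x') (Pent x')).
Lemma eval_EM2 z j i : eval z (EM2 j i) = Mmat d (Wof z) (Pof z) j i.
Proof. unfold EM2, Mmat. rewrite eval_Esum. apply rsum_ext; intros; simpl; rewrite eval_Ewm; reflexivity. Qed.

Definition Esw (x x' : nat) : expr I := Esum dY (fun y => Went y x x').
Lemma eval_Esw z x x' : eval z (Esw x x') = sumW dY (Wof z) x x'.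
Proof. unfold Esw, sumW. rewrite eval_Esum. reflexivity. Qed.

Definition EB (i j : nat) : expr I :=
  EA (EC ((if Nat.eqb i j then 1 else 0) + (if Nat.eqb i 0 then 1 else 0))) (EM (EC (-1)) (Esw i j)).
Lemma eval_EB z i j : eval z (EB i j) = Bmat dY (Wof z) i j.
Proof. unfold EB, Bmat. simpl. rewrite eval_Esw. ring. Qed.

Variable idx : list I.
Hypothesis Hw : forall y x x', (y < dY)%nat -> (x < d)%nat -> (x' < d)%nat -> ~ (y = 0%nat /\ x = 0%nat) ->
  In (vw (y, x, x')) idx.
Hypothesis Hp : forall x, (1 <= x)%nat -> (x < d)%nat -> In (vp x) idx.

Lemma vin_Went y x x' : (y < dY)%nat -> (x < d)%nat -> (x' < d)%nat -> vin idx (Went y x x').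
Proof.
  intros Hy Hx Hx' i Hi. unfold Went in Hi.
  destruct (Nat.eqb_spec y 0); destruct (Nat.eqb_spec x 0); simpl in Hi.
  - destruct Hi as [[]|[[]|Hi]]. apply occ_Esum in Hi. destruct Hi as [a [Ha Hi]].
    apply occ_Esum in Hi. destruct Hi as [b [Hb Hi]].
    destruct (Nat.eqb_spec b 0); destruct (Nat.eqb_spec a 0); simpl in Hi; try contradiction;
      subst; apply Hw; auto; lia.
  - subst; apply Hw; auto; lia.
  - subst; apply Hw; auto; lia.
  - subst; apply Hw; auto; lia.
Qed.

Lemma vin_Ewm ys x x' : word_ok dY ys -> (x' < d)%nat -> vin idx (Ewm ys x x').
Proof.
  revert x'. induction ys; intros x' Hok Hx' i Hi; simpl in Hi; [contradiction|].
  inversion Hok as [|y' ys' Hy Hys]; subst. apply occ_Esum in Hi. destruct Hi as [k [Hk [Hi|Hi]]].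
  - exact (IHys k Hys Hk i Hi).
  - exact (vin_Went a k x' Hy Hk Hx' i Hi).
Qed.

Lemma vin_ER i j : (2 <= dY)%nat -> (j < d)%nat -> vin idx (ER i j).
Proof.
  intros HdY Hj t Ht. apply occ_Esum in Ht. destruct Ht as [x [Hx Ht]].
  exact (vin_Ewm (tword d i) x j (tword_ok d dY i HdY) Hj t Ht).
Qed.

Lemma vin_Pent x : (x < d)%nat -> vin idx (Pent x).
Proof.
  intros Hx t Ht. unfold Pent in Ht. destruct (Nat.eqb_spec x 0); simpl in Ht.
  - destruct Ht as [[]|[[]|Ht]]. apply occ_Esum in Ht. destruct Ht as [k [Hk Ht]].
    destruct (Nat.eqb_spec k 0); simpl in Ht; [contradiction|]. subst; apply Hp; lia.
  - subst; apply Hp; lia.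
Qed.

Lemma vin_EM2 j i : (2 <= dY)%nat -> vin idx (EM2 j i).
Proof.
  intros HdY t Ht. apply occ_Esum in Ht. destruct Ht as [x' [Hx' [Ht|Ht]]].
  - exact (vin_Ewm _ j x' (repeat_ok dY i HdY) Hx' t Ht).
  - exact (vin_Pent x' Hx' t Ht).
Qed.

Lemma vin_Esw x x' : (x < d)%nat -> (x' < d)%nat -> vin idx (Esw x x').
Proof.
  intros Hx Hx' t Ht. apply occ_Esum in Ht. destruct Ht as [y [Hy Ht]]. exact (vin_Went y x x' Hy Hx Hx' t Ht).
Qed.

Lemma vin_EB i j : (i < d)%nat -> (j < d)%nat -> vin idx (EB i j).
Proof.
  intros Hi Hj t Ht. simpl in Ht. destruct Ht as [[]|[[]|Ht]]. exact (vin_Esw i j Hi Hj t Ht).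
Qed.

End ExprDefs.

From Stdlib Require Import Reals List Lra Lia Arith Bool.
Import ListNotations.
Open Scope R_scope.

Arguments EC {I} c. Arguments EV {I} i. Arguments EA {I} a b. Arguments EM {I} a b.
Arguments eval {I} z e. Arguments occurs {I} t e. Arguments vin {I} idx e.

Lemma rsum_first n g : rsum (S n) g = g 0%nat + rsum n (fun k => g (S k)).
Proof.
  unfold rsum. simpl. f_equal. rewrite <- seq_shift, map_map. reflexivity.
Qed.

Lemma rsum_ind d m : rsum d (fun x => if Nat.eqb x m then 1 else 0) = if Nat.ltb m d then 1 else 0.
Proof.
  induction d; [reflexivity|]. rewrite rsum_S, IHd.
  destruct (Nat.ltb_spec m d); destruct (Nat.ltb_spec m (S d)); destruct (Nat.eqb_spec d m); try lia; ring.
Qed.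

Definition Wst (y x x' : nat) : R :=
  if Nat.eqb y 0 then (if Nat.eqb x 0 then 1 else - (if Nat.eqb x (S x') then 1 else 0))
  else if Nat.eqb y 1 then (if Nat.eqb x (S x') then 1 else 0) else 0.

Definition zw (t : nat * nat * nat) : R :=
  match t with (y, x, x') =>
    if (Nat.eqb y 1 && Nat.eqb x (S x'))%bool then 1
    else if (Nat.eqb y 0 && Nat.eqb x (S x'))%bool then -1 else 0 end.

Section Wit.
Variables (d dY : nat) (HdY : (2 <= dY)%nat) (Hd : (1 <= d)%nat).

Lemma sum_y_zw a x' : rsum dY (fun b => if (Nat.eqb b 0 && Nat.eqb a 0)%bool then 0 else zw (b, a, x')) = 0.
Proof.
  destruct dY as [|[|m]]; [lia|lia|]. rewrite !rsum_first.
  rewrite rsum_zero.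
  - simpl. destruct (Nat.eqb_spec a 0); simpl; destruct (Nat.eqb_spec a (S x')); simpl; try lia; ring.
  - intros k _. simpl. destruct (Nat.eqb a 0); reflexivity.
Qed.

Lemma Wof_wit I (vw : nat * nat * nat -> I) (z : I -> R) : (forall t, z (vw t) = zw t) ->
  forall y x x', Wof d dY I vw z y x x' = Wst y x x'.
Proof.
  intros Hz y x x'. unfold Wof, Went.
  destruct (Nat.eqb_spec y 0); destruct (Nat.eqb_spec x 0); simpl.
  - subst. rewrite eval_Esum. rewrite rsum_zero; [unfold Wst; simpl; ring|].
    intros a _. rewrite eval_Esum. transitivity (rsum dY (fun b => if (Nat.eqb b 0 && Nat.eqb a 0)%bool then 0 else zw (b, a, x'))).
    + apply rsum_ext. intros b _. destruct (Nat.eqb b 0 && Nat.eqb a 0)%bool; simpl; auto.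
    + apply sum_y_zw.
  - rewrite Hz. subst. unfold Wst, zw. simpl. destruct (Nat.eqb_spec x 0); [lia|].
    destruct (Nat.eqb x (S x')); simpl; ring.
  - rewrite Hz. unfold Wst, zw. destruct (Nat.eqb_spec y 0); [lia|].
    destruct (Nat.eqb_spec y 1); simpl; destruct (Nat.eqb x (S x')); reflexivity.
  - rewrite Hz. unfold Wst, zw. destruct (Nat.eqb_spec y 0); [lia|].
    destruct (Nat.eqb_spec y 1); simpl; destruct (Nat.eqb x (S x')); reflexivity.
Qed.

Lemma wm_rep i x x' : (x < d)%nat -> (x' < d)%nat ->
  wm d Wst (repeat 1%nat i) x x' = if Nat.eqb x (x' + i) then 1 else 0.
Proof.
  revert x'. induction i; intros x' Hx Hx'; simpl.
  - rewrite Nat.add_0_r. reflexivity.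
  - transitivity (rsum d (fun k => (if Nat.eqb x (k + i) then 1 else 0) * (if Nat.eqb k (S x') then 1 else 0))).
    + apply rsum_ext. intros k Hk. rewrite IHi by auto. unfold Wst. simpl. reflexivity.
    + destruct (Nat.ltb_spec (S x') d).
      * rewrite (rsum_delta' d (S x') (fun k => if Nat.eqb x (k + i) then 1 else 0)) by auto.
        replace (S x' + i)%nat with (x' + S i)%nat by lia. reflexivity.
      * rewrite rsum_zero.
        -- destruct (Nat.eqb_spec x (x' + S i)); [lia|reflexivity].
        -- intros k Hk. destruct (Nat.eqb_spec k (S x')); [lia|ring].
Qed.

Lemma Rmat_wit i j : (i < d)%nat -> (j < d)%nat ->
  Rmat d Wst i j = if Nat.ltb i j then 0 else if Nat.eqb i j then 1 else Rmat d Wst i j.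
Proof.
  intros Hi Hj. destruct (Nat.ltb_spec i j); [|destruct (Nat.eqb_spec i j); [|reflexivity]].
  - unfold Rmat, tword. destruct (Nat.eqb_spec i (d - 1)); [lia|].
    rewrite (rsum_ext d _ (fun x => if Nat.eqb x (j + (d - 1 - i)) then 1 else 0)).
    + rewrite rsum_ind. destruct (Nat.ltb_spec (j + (d - 1 - i)) d); [lia|reflexivity].
    + intros x Hx. apply wm_rep; auto.
  - subst. unfold Rmat, tword. destruct (Nat.eqb_spec j (d - 1)).
    + simpl. rewrite (rsum_ext d _ (fun x => Wst 0 x j)).
      * destruct d as [|d']; [lia|]. rewrite rsum_first. rewrite rsum_zero.
        -- unfold Wst; simpl; ring.
        -- intros k Hk. unfold Wst; simpl. destruct (Nat.eqb_spec k j); [lia|ring].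
      * intros x Hx. rewrite (rsum_delta d x (fun k => Wst 0 k j)) by auto. reflexivity.
    + rewrite (rsum_ext d _ (fun x => if Nat.eqb x (j + (d - 1 - j)) then 1 else 0)).
      * rewrite rsum_ind. destruct (Nat.ltb_spec (j + (d - 1 - j)) d); [reflexivity|lia].
      * intros x Hx. apply wm_rep; auto.
Qed.

Lemma Mmat_wit (P : nat -> R) j i : (j < d)%nat -> (i < d)%nat ->
  (forall x, (x < d)%nat -> P x = if Nat.eqb x 0 then 1 else 0) ->
  Mmat d Wst P j i = if Nat.eqb j i then 1 else 0.
Proof.
  intros Hj Hi HP. unfold Mmat.
  rewrite (rsum_ext d _ (fun x' => (if Nat.eqb j (x' + i) then 1 else 0) * (if Nat.eqb x' 0 then 1 else 0))).
  - rewrite (rsum_delta' d 0 (fun x' => if Nat.eqb j (x' + i) then 1 else 0)) by lia. reflexivity.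
  - intros x Hx. rewrite wm_rep, HP; auto.
Qed.

Lemma sumW_wit i j : (i < d)%nat -> (j < d)%nat -> sumW dY Wst i j = if Nat.eqb i 0 then 1 else 0.
Proof.
  intros Hi Hj. unfold sumW. destruct dY as [|[|m]]; [lia|lia|]. rewrite !rsum_first.
  rewrite rsum_zero; [|intros; reflexivity].
  unfold Wst; simpl. destruct (Nat.eqb_spec i 0); [subst; simpl; ring|].
  destruct (Nat.eqb i (S j)); ring.
Qed.

Lemma Bmat_wit i j : (i < d)%nat -> (j < d)%nat -> Bmat dY Wst i j = if Nat.eqb i j then 1 else 0.
Proof. intros Hi Hj. unfold Bmat. rewrite sumW_wit by auto. ring. Qed.

End Wit.

Lemma Pof_wit d I (vp : nat -> I) (z : I -> R) : (forall x, z (vp x) = 0) ->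
  forall x, Pof d I vp z x = if Nat.eqb x 0 then 1 else 0.
Proof.
  intros Hz x. unfold Pof, Pent. destruct (Nat.eqb x 0); simpl.
  - rewrite eval_Esum, rsum_zero; [ring|]. intros k _. destruct (Nat.eqb k 0); simpl; auto.
  - apply Hz.
Qed.

Lemma sumW_wit1 d dY I (vw : nat * nat * nat -> I) (z : I -> R) x x' : (1 <= dY)%nat -> (1 <= x)%nat ->
  (forall t, z (vw t) = if Nat.eqb (fst (fst t)) 0 then 1 else 0) ->
  sumW dY (Wof d dY I vw z) x x' = 1.
Proof.
  intros HdY Hx Hz. unfold sumW. destruct dY as [|m]; [lia|]. rewrite rsum_first.
  unfold Wof at 1, Went. destruct (Nat.eqb_spec x 0); [lia|]. rewrite Bool.andb_false_r. simpl. rewrite Hz. simpl.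
  rewrite rsum_zero; [ring|]. intros k _. unfold Wof, Went. simpl. rewrite Hz. reflexivity.
Qed.

From Stdlib Require Import Reals List Lra Lia Arith Bool Classical.
Import ListNotations.
Open Scope R_scope.

Arguments EC {I} c. Arguments EV {I} i. Arguments EA {I} a b. Arguments EM {I} a b.
Arguments eval {I} z e. Arguments occurs {I} t e. Arguments vin {I} idx e.
Arguments inbox {I} idx z. Arguments fnull {I} idx S. Arguments fcov {I} idx S eps.

Definition dec3 : forall x y : nat * nat * nat, {x = y} + {x <> y}.
Proof. decide equality; [apply Nat.eq_dec|]. decide equality; apply Nat.eq_dec. Defined.
Definition decS : forall x y : (nat * nat * nat) + nat, {x = y} + {x <> y}.
Proof. decide equality; [apply dec3|apply Nat.eq_dec]. Defined.

Lemma In_W_idx d dY y x x' : (y < dY)%nat -> (x < d)%nat -> (x' < d)%nat -> ~ (y = 0%nat /\ x = 0%nat) ->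
  In (y, x, x') (W_idx d dY).
Proof.
  intros Hy Hx Hx' Hn. unfold W_idx. apply in_flat_map. exists y. split; [apply in_seq; lia|].
  apply in_flat_map. exists x. split; [apply in_seq; lia|].
  apply in_flat_map. exists x'. split; [apply in_seq; lia|].
  destruct (Nat.eqb_spec y 0); destruct (Nat.eqb_spec x 0); simpl; try tauto.
Qed.

Lemma W_idx_inv d dY t : In t (W_idx d dY) -> exists y x x', t = (y, x, x') /\
  (y < dY)%nat /\ (x < d)%nat /\ (x' < d)%nat /\ ~ (y = 0%nat /\ x = 0%nat).
Proof.
  unfold W_idx. intros H. apply in_flat_map in H. destruct H as [y [Hy H]].
  apply in_flat_map in H. destruct H as [x [Hx H]].
  apply in_flat_map in H. destruct H as [x' [Hx' H]]. apply in_seq in Hy, Hx, Hx'.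
  destruct (Nat.eqb_spec y 0); destruct (Nat.eqb_spec x 0); simpl in H; try tauto;
    destruct H as [<-|[]]; exists y, x, x'; repeat split; auto; lia.
Qed.

Lemma rsum_nonneg n f : (forall k, (k < n)%nat -> 0 <= f k) -> 0 <= rsum n f.
Proof. induction n; intros H; [unfold rsum; simpl; lra|]. rewrite rsum_S. pose proof (H n ltac:(lia)).
  assert (0 <= rsum n f) by (apply IHn; intros; apply H; lia). lra. Qed.

Lemma rsum_ge_term n f j : (forall k, (k < n)%nat -> 0 <= f k) -> (j < n)%nat -> f j <= rsum n f.
Proof.
  induction n; intros H Hj; [lia|]. rewrite rsum_S.
  assert (0 <= rsum n f) by (apply rsum_nonneg; intros; apply H; lia).
  destruct (Nat.eq_dec j n).
  - subst. lra.
  - assert (f j <= rsum n f) by (apply IHn; [intros; apply H; lia|lia]). pose proof (H n ltac:(lia)). lra.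
Qed.

Lemma trans_bound d dY W y x x' : is_trans d dY W -> (y < dY)%nat -> (x < d)%nat -> (x' < d)%nat ->
  0 <= W y x x' <= 1.
Proof.
  intros [H1 H2] Hy Hx Hx'. split; [apply H1; auto|]. rewrite <- (H2 x' Hx').
  apply Rle_trans with (rsum d (fun x => W y x x')).
  - apply (rsum_ge_term d (fun x => W y x x')); auto; intros; apply H1; auto.
  - apply (rsum_ge_term dY (fun y => rsum d (fun x => W y x x')) y); auto;
    intros; apply rsum_nonneg; intros; apply H1; auto.
Qed.

Lemma prob_bound d P x : is_prob d P -> (x < d)%nat -> 0 <= P x <= 1.
Proof. intros [H1 H2] Hx. split; auto. rewrite <- H2. apply rsum_ge_term; auto. Qed.

Lemma Wof_agree d dY I (vw : nat * nat * nat -> I) (z : I -> R) W :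
  (1 <= d)%nat -> (1 <= dY)%nat -> is_trans d dY W ->
  (forall y x x', (y < dY)%nat -> (x < d)%nat -> (x' < d)%nat -> ~ (y = 0%nat /\ x = 0%nat) -> z (vw (y, x, x')) = W y x x') ->
  forall y x x', (y < dY)%nat -> (x < d)%nat -> (x' < d)%nat -> Wof d dY I vw z y x x' = W y x x'.
Proof.
  intros Hd HdY [_ HT] Hz y x x' Hy Hx Hx'. unfold Wof, Went.
  assert (Case: (y = 0 /\ x = 0)%nat \/ ~ (y = 0 /\ x = 0)%nat) by lia.
  destruct Case as [[-> ->]|Hn].
  2: { destruct (Nat.eqb_spec y 0); destruct (Nat.eqb_spec x 0); simpl; try (apply Hz; auto; tauto); exfalso; tauto. }
  simpl. rewrite eval_Esum.
  assert (E: rsum d (fun a => rsum dY (fun b => W b a x')) =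
     W 0%nat 0%nat x' + rsum d (fun a => eval z (Esum I dY (fun b => if (Nat.eqb b 0 && Nat.eqb a 0)%bool then EC 0 else EV (vw (b, a, x')))))).
  { rewrite (rsum_ext d _ (fun a => (if Nat.eqb a 0 then W 0%nat 0%nat x' else 0) +
        eval z (Esum I dY (fun b => if (Nat.eqb b 0 && Nat.eqb a 0)%bool then EC 0 else EV (vw (b, a, x')))))).
    - rewrite rsum_plus. f_equal. destruct d as [|d']; [lia|]. rewrite rsum_first, rsum_zero; [simpl; ring|].
      intros; reflexivity.
    - intros a Ha. rewrite eval_Esum. destruct dY as [|m]; [lia|]. rewrite !rsum_first.
      destruct (Nat.eqb_spec a 0).
      + subst. simpl. rewrite Rplus_0_l. f_equal. apply rsum_ext. intros k Hk. symmetry. apply Hz; lia.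
      + simpl. rewrite Hz by lia. rewrite Rplus_0_l. f_equal. apply rsum_ext. intros k Hk. symmetry. apply Hz; lia. }
  pose proof (HT x' Hx') as HT'. rewrite rsum_comm in HT'. rewrite HT' in E. simpl. lra.
Qed.

Lemma Pof_agree d I (vp : nat -> I) (z : I -> R) P : is_prob d P ->
  (forall x, (1 <= x)%nat -> (x < d)%nat -> z (vp x) = P x) ->
  forall x, (x < d)%nat -> Pof d I vp z x = P x.
Proof.
  intros [_ HP] Hz x Hx. unfold Pof, Pent. destruct (Nat.eqb_spec x 0); simpl; [|apply Hz; lia].
  subst. rewrite eval_Esum. destruct d as [|d']; [lia|]. rewrite rsum_first in *. simpl.
  rewrite (rsum_ext d' _ (fun k => P (S k))) by (intros; apply Hz; lia). lra.
Qed.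

Lemma fnull_list I (dec : forall x y : I, {x = y} + {x <> y}) (idx : list I) (L : list (expr I)) :
  (forall e, In e L -> vin idx e /\ exists z0, inbox idx z0 /\ eval z0 e <> 0) ->
  fnull idx (fun z => inbox idx z /\ exists e, In e L /\ eval z e = 0).
Proof.
  induction L; intros H.
  - apply fnull_empty. intros z [_ [e [[] _]]].
  - eapply fnull_sub; [|apply fnull_union; [apply (poly_fnull I dec idx a); apply H; simpl; auto|apply IHL; intros; apply H; simpl; auto]].
    intros z [Hz [e [[<-|He] Ee]]]; [left; auto|right; split; eauto].
Qed.

Module MC.
From Stdlib Require Import Reals List Lra.
From mathcomp Require Import all_boot all_algebra all_fingroup Rstruct.
Import GRing.Theory.

Arguments EC {I} c. Arguments EV {I} i. Arguments EA {I} a b. Arguments EM {I} a b.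
Arguments eval {I} z e.


Local Open Scope ring_scope.

Lemma rsum_big n f : rsum n f = \sum_(i < n) f i.
Proof.
  elim: n => [|n IH]; first by rewrite big_ord0.
  rewrite big_ord_recr /= -IH /rsum List.seq_S List.map_app fold_right_app /=.
  rewrite fold_Rplus_acc. by rewrite Rplus_0_r.
Qed.

Definition sumE {I} (l : list (expr I)) : expr I := fold_right EA (EC 0%R) l.
Definition prodE {I} (l : list (expr I)) : expr I := fold_right EM (EC 1%R) l.

Lemma eval_sumE {I} {T} (z : I -> R) (F : T -> expr I) (l : list T) :
  eval z (sumE (List.map F l)) = \sum_(x <- l) eval z (F x).
Proof. elim: l => [|a l IH]; first by rewrite big_nil. by rewrite big_cons /= IH. Qed.

Lemma eval_prodE {I} {T} (z : I -> R) (F : T -> expr I) (l : list T) :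
  eval z (prodE (List.map F l)) = \prod_(x <- l) eval z (F x).
Proof. elim: l => [|a l IH]; first by rewrite big_nil. by rewrite big_cons /= IH. Qed.

Definition detE {I} {n} (M : 'I_n -> 'I_n -> expr I) : expr I :=
  sumE (List.map (fun s : 'S_n => EM (EC ((-1) ^+ s)) (prodE (List.map (fun i => M i (s i)) (index_enum 'I_n))))
     (index_enum {perm 'I_n})).

Lemma eval_detE {I} (z : I -> R) n (M : 'I_n -> 'I_n -> expr I) :
  eval z (detE M) = \det (\matrix_(i, j) eval z (M i j)).
Proof.
  rewrite /detE eval_sumE /determinant. apply: eq_bigr => s _ /=.
  rewrite eval_prodE. congr (_ * _). apply: eq_bigr => i _. by rewrite mxE.
Qed.

Lemma eqbE (i j : nat) : Nat.eqb i j = (i == j).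
Proof. by case: (PeanoNat.Nat.eqb_spec i j) => [->|/eqP/negbTE ->]; rewrite ?eqxx. Qed.

Lemma det_kernel d (Rm : nat -> nat -> R) (v : nat -> R) :
  \det (\matrix_(i < d, j < d) Rm i j) != 0 ->
  (forall i, (i < d)%N -> rsum d (fun j => Rm i j * v j) = 0) ->
  forall j, (j < d)%N -> v j = 0.
Proof.
  move=> Hdet H j Hj.
  set A := \matrix_(i < d, j < d) Rm i j. set vv := \col_(j < d) v j.
  have HA : A \in unitmx by rewrite unitmxE unitfE.
  have Hz : A *m vv = 0.
  { apply/matrixP => i k. rewrite !mxE -[RHS](H i (ltn_ord i)) rsum_big.
    apply: eq_bigr => l _. by rewrite !mxE. }
  have : vv = 0 by rewrite -(mulKmx HA vv) Hz mulmx0.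
  move/matrixP => /(_ (Ordinal Hj) 0). by rewrite !mxE.
Qed.

Lemma det_span d (M : nat -> nat -> R) : \det (\matrix_(i < d, j < d) M i j) != 0 ->
  forall v : nat -> R, exists c : nat -> R, forall x, (x < d)%N -> rsum d (fun i => M x i * c i) = v x.
Proof.
  move=> Hdet v.
  set A := \matrix_(i < d, j < d) M i j. set vv := \col_(j < d) v j.
  have HA : A \in unitmx by rewrite unitmxE unitfE.
  set cc := invmx A *m vv.
  exists (fun i => \sum_(k < d | val k == i) cc k 0) => x Hx.
  have := mulKVmx HA vv. move/matrixP => /(_ (Ordinal Hx) 0). rewrite !mxE => <-.
  rewrite rsum_big. apply: eq_bigr => i _. rewrite mxE. congr (_ * _).
  rewrite (eq_bigl (fun k => k == i)); first by rewrite big_pred1_eq.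
  by move=> k.
Qed.

Definition cram d (B : nat -> nat -> R) (x' : nat) : R :=
  \det (\matrix_(i < d, j < d) if Nat.eqb j x' then (if Nat.eqb i 0 then 1 else 0) else B i j).

Lemma stat_unique d (B : nat -> nat -> R) (P : nat -> R) : (0 < d)%N ->
  \det (\matrix_(i < d, j < d) B i j) != 0 ->
  (forall i, (i < d)%N -> rsum d (fun x' => B i x' * P x') = if Nat.eqb i 0 then 1 else 0) ->
  forall x', (x' < d)%N -> \det (\matrix_(i < d, j < d) B i j) * P x' = cram d B x'.
Proof.
  case: d => [//|d] _ Hdet H x' Hx'.
  set A := \matrix_(i < d.+1, j < d.+1) B i j.
  have HA : A \in unitmx by rewrite unitmxE unitfE.
  set pp := \col_(j < d.+1) P j.
  set qq := \col_(j < d.+1) cram d.+1 B j.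
  have Hq : forall j : 'I_d.+1, cram d.+1 B j = \adj A j ord0.
  { move=> j. rewrite /cram mxE (expand_det_col _ j).
    rewrite (bigD1 ord0) //= big1 ?addr0.
    - rewrite !mxE eqbE eqxx /= mul1r /cofactor. congr (_ * _). congr (\det _).
      apply/matrixP => a b. rewrite !mxE eqbE.
      have -> : (lift j b == j :> nat) = false by apply/negbTE; rewrite (inj_eq val_inj) eq_sym neq_lift.
      done.
    - move=> i Hi. rewrite !mxE eqbE eqxx /= eqbE.
      have -> : (i == 0%N :> nat) = false by apply/negbTE.
      by rewrite mul0r. }
  have E1 : A *m pp = \col_(i < d.+1) (if i == ord0 then 1 else 0).
  { apply/matrixP => i k. rewrite !mxE -[X in _ = X]/(if (i == ord0) then 1 else 0).
    have := H i (ltn_ord i). rewrite rsum_big eqbE => HH.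
    have -> : (i == ord0) = (i == 0%N :> nat) by [].
    rewrite -HH. apply: eq_bigr => l _. by rewrite !mxE. }
  have E2 : A *m qq = \det A *: \col_(i < d.+1) (if i == ord0 then 1 else 0).
  { apply/matrixP => i k. rewrite !mxE.
    have := mul_mx_adj A. move/matrixP => /(_ i ord0). rewrite !mxE => HH.
    rewrite (eq_bigr (fun l => A i l * \adj A l ord0)); last first.
    { move=> l _. by rewrite [qq _ _]mxE Hq. }
    rewrite HH. by case: (i == ord0); rewrite ?mulr1 ?mulr0 /=. }
  have E3 : A *m (\det A *: pp - qq) = 0 by rewrite mulmxBr -scalemxAr E1 E2 subrr.
  have E4 : \det A *: pp - qq = 0 by rewrite -(mulKmx HA (_ - _)) E3 mulmx0.
  move: E4 => /eqP. rewrite subr_eq0 => /eqP /matrixP /(_ (Ordinal Hx') 0). by rewrite !mxE.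
Qed.

Lemma ltPn a b : (a < b)%N -> (a < b)%coq_nat.
Proof. by move/ltP. Qed.

Lemma trivK_of_det d dY W : (2 <= dY)%coq_nat ->
  (\det (\matrix_(i < d, j < d) Rmat d W i j) != 0)%R -> trivK d dY W.
Proof.
  move=> HdY Hdet v Hv x Hx. apply: (det_kernel d (Rmat d W) v Hdet _ x); last by apply/ltP.
  move=> i Hi. exact: (inK_rows d dY W v HdY Hv i (ltPn _ _ Hi)).
Qed.

Lemma fullV_of_det d dY W P : (2 <= dY)%coq_nat ->
  (\det (\matrix_(j < d, i < d) Mmat d W P j i) != 0)%R -> fullV d dY W P.
Proof.
  move=> HdY Hdet. apply: fullV_of_span => // v.
  have [c Hc] := det_span d (Mmat d W P) Hdet v. exists c => x Hx. apply: Hc. by apply/ltP.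
Qed.

Lemma fullV_stat d dY W : (2 <= dY)%coq_nat -> (0 < d)%coq_nat ->
  (\det (\matrix_(i < d, j < d) Bmat dY W i j) != 0)%R ->
  (\det (\matrix_(j < d, i < d) Mmat d W (cram d (Bmat dY W)) j i) != 0)%R ->
  forall P, stationary d dY W P -> fullV d dY W P.
Proof.
  move=> HdY Hd HB HM P HP. apply: fullV_of_span => // v.
  have [c Hc] := det_span d _ HM v.
  set D := (\det (\matrix_(i < d, j < d) Bmat dY W i j))%R.
  have EP : forall x', (x' < d)%coq_nat -> Rmult D (P x') = cram d (Bmat dY W) x'.
  { move=> x' Hx'. apply: stat_unique => //; first by apply/ltP.
    - move=> i Hi. apply: stationary_B => //. exact: ltPn.
    - by apply/ltP. }
  exists (fun i => Rmult (c i) D) => x Hx.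
  rewrite -(Hc x); last by apply/ltP.
  apply: rsum_ext => i Hi. rewrite /Mmat.
  have -> : rsum d (fun x' => wm d W (repeat 1%nat i) x x' * cram d (Bmat dY W) x')%R =
            Rmult (rsum d (fun x' => Rmult (wm d W (repeat 1%nat i) x x') (P x'))) D.
  { rewrite Rmult_comm -rsum_scal. apply: rsum_ext => k Hk. rewrite -EP //. change (
      Rmult (wm d W (repeat 1%nat i) x k) (Rmult D (P k)) = Rmult D (Rmult (wm d W (repeat 1%nat i) x k) (P k))). ring. }
  change (Rmult (rsum d (fun x' => Rmult (wm d W (repeat 1%nat i) x x') (P x'))) (Rmult (c i) D) =
    Rmult (Rmult (rsum d (fun x' => Rmult (wm d W (repeat 1%nat i) x x') (P x'))) D) (c i)). ring.
Qed.

Local Open Scope ring_scope.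

Arguments EC {I} c. Arguments EV {I} i. Arguments EA {I} a b. Arguments EM {I} a b.
Arguments eval {I} z e. Arguments occurs {I} t e. Arguments vin {I} idx e.

Lemma occ_sumE {I T} (F : T -> expr I) (l : list T) t :
  occurs t (sumE (List.map F l)) -> exists x, List.In x l /\ occurs t (F x).
Proof.
  elim: l => [|a l IH] /=; first by [].
  case=> [H|H]; first by exists a; split; [left|].
  have [x [Hx Hx']] := IH H. by exists x; split; [right|].
Qed.

Lemma occ_prodE {I T} (F : T -> expr I) (l : list T) t :
  occurs t (prodE (List.map F l)) -> exists x, List.In x l /\ occurs t (F x).
Proof.
  elim: l => [|a l IH] /=; first by [].
  case=> [H|H]; first by exists a; split; [left|].
  have [x [Hx Hx']] := IH H. by exists x; split; [right|].
Qed.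

Lemma occ_detE {I} n (M : 'I_n -> 'I_n -> expr I) t :
  occurs t (detE M) -> exists a b, occurs t (M a b).
Proof.
  rewrite /detE => H0. have [s [_ Hs]] := occ_sumE _ _ _ H0.
  case: Hs => [[]|H].
  have [i [_ Hi]] := occ_prodE _ _ _ H. by exists i, (s i).
Qed.

Lemma vin_detE {I} (idx : list I) n (M : 'I_n -> 'I_n -> expr I) :
  (forall a b, vin idx (M a b)) -> vin idx (detE M).
Proof. move=> H t Ht. have [a [b Hab]] := occ_detE n M t Ht. exact: (H a b t Hab). Qed.

Lemma det_eq_ext d (A B : nat -> nat -> R) :
  (forall i j, (i < d)%coq_nat -> (j < d)%coq_nat -> A i j = B i j) ->
  \det (\matrix_(i < d, j < d) A i j) = \det (\matrix_(i < d, j < d) B i j).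
Proof.
  move=> H. congr (\det _). apply/matrixP => i j. rewrite !mxE. apply: H; exact/ltP.
Qed.

Lemma eval_detE' {I} (z : I -> R) d (M : nat -> nat -> expr I) (A : nat -> nat -> R) :
  (forall i j, eval z (M i j) = A i j) ->
  eval z (detE (fun i j : 'I_d => M i j)) = \det (\matrix_(i < d, j < d) A i j).
Proof.
  move=> H. rewrite eval_detE. congr (\det _). apply/matrixP => i j. by rewrite !mxE H.
Qed.

Lemma det_idnat d : \det (\matrix_(i < d, j < d) (if Nat.eqb i j then 1 else 0 : R)) = 1.
Proof.
  have -> : (\matrix_(i < d, j < d) (if Nat.eqb i j then 1 else 0 : R)) = 1%:M.
  { apply/matrixP => i j. rewrite !mxE. case: (PeanoNat.Nat.eqb_spec i j) => [/val_inj ->|H].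
    - by rewrite eqxx.
    - have -> : (i == j) = false by apply/negbTE/eqP => E; apply: H; rewrite E.
      by []. }
  by rewrite det1.
Qed.

Section Certs.
Variables (d dY : nat) (I : Type) (vw : nat * nat * nat -> I) (vp : nat -> I).

Definition D1E : expr I := detE (fun i j : 'I_d => ER d dY I vw i j).
Definition D2E : expr I := detE (fun j i : 'I_d => EM2 d dY I vw vp j i).
Definition DBE : expr I := detE (fun i j : 'I_d => EB d dY I vw i j).
Definition QE (x' : nat) : expr I :=
  detE (fun i j : 'I_d => if Nat.eqb j x' then EC (if Nat.eqb i 0 then 1 else 0)%R else EB d dY I vw i j).
Definition D3E : expr I :=
  detE (fun j i : 'I_d => Esum I d (fun x' => EM (Ewm d dY I vw (repeat 1%nat i) j x') (QE x'))).

Lemma eval_D1E z : eval z D1E = \det (\matrix_(i < d, j < d) Rmat d (Wof d dY I vw z) i j).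
Proof. apply: eval_detE' => i j. exact: eval_ER. Qed.

Lemma eval_D2E z : eval z D2E = \det (\matrix_(j < d, i < d) Mmat d (Wof d dY I vw z) (Pof d I vp z) j i).
Proof. apply: eval_detE' => i j. exact: eval_EM2. Qed.

Lemma eval_DBE z : eval z DBE = \det (\matrix_(i < d, j < d) Bmat dY (Wof d dY I vw z) i j).
Proof. apply: eval_detE' => i j. exact: eval_EB. Qed.

Lemma eval_QE z x' : eval z (QE x') = cram d (Bmat dY (Wof d dY I vw z)) x'.
Proof.
  rewrite /QE /cram eval_detE. congr (\det _). apply/matrixP => i j. rewrite !mxE.
  case: (PeanoNat.Nat.eqb j x') => //. exact: eval_EB.
Qed.

Lemma eval_D3E z : eval z D3E =
  \det (\matrix_(j < d, i < d) Mmat d (Wof d dY I vw z) (cram d (Bmat dY (Wof d dY I vw z))) j i).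
Proof.
  rewrite eval_detE. congr (\det _). apply/matrixP => j i. rewrite !mxE.
  rewrite eval_Esum /Mmat. apply: rsum_ext => k _ /=.
  by rewrite eval_Ewm eval_QE.
Qed.

End Certs.

Local Open Scope ring_scope.

Arguments EC {I} c. Arguments EV {I} i. Arguments EA {I} a b. Arguments EM {I} a b.
Arguments eval {I} z e. Arguments occurs {I} t e. Arguments vin {I} idx e.

Section WitDet.
Variables (d dY : nat) (HdY : (2 <= dY)%coq_nat) (Hd : (1 <= d)%coq_nat).

Lemma det_Rmat_wit : \det (\matrix_(i < d, j < d) Rmat d Wst i j) = 1.
Proof.
  rewrite det_trig.
  - apply: big1 => i _. rewrite mxE (Rmat_wit d dY HdY Hd i i); try exact/ltP.
    by rewrite PeanoNat.Nat.ltb_irrefl PeanoNat.Nat.eqb_refl.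
  - apply/forallP => i. apply/forallP => j. apply/implyP => Hij.
    rewrite mxE (Rmat_wit d dY HdY Hd i j); try exact/ltP.
    have -> : PeanoNat.Nat.ltb i j = true by apply/PeanoNat.Nat.ltb_lt; apply/ltP.
    by [].
Qed.

Lemma det_Mmat_wit P : (forall x, (x < d)%coq_nat -> P x = if PeanoNat.Nat.eqb x 0 then 1 else 0) ->
  \det (\matrix_(j < d, i < d) Mmat d Wst P j i) = 1.
Proof.
  move=> HP. rewrite (det_eq_ext d _ (fun j i => if PeanoNat.Nat.eqb j i then 1 else 0)); first exact: det_idnat.
  move=> j i Hj Hi. by rewrite (Mmat_wit d dY HdY Hd P j i Hj Hi HP).
Qed.

Lemma det_Bmat_wit : \det (\matrix_(i < d, j < d) Bmat dY Wst i j) = 1.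
Proof.
  rewrite (det_eq_ext d _ (fun i j => if PeanoNat.Nat.eqb i j then 1 else 0)); first exact: det_idnat.
  move=> i j Hi Hj. by rewrite (Bmat_wit d dY HdY Hd i j Hi Hj).
Qed.

Lemma cram_wit x' : (x' < d)%coq_nat -> cram d (Bmat dY Wst) x' = if PeanoNat.Nat.eqb x' 0 then 1 else 0.
Proof.
  move=> Hx'. rewrite /cram.
  rewrite (det_eq_ext d (fun i j => if PeanoNat.Nat.eqb j x' then (if PeanoNat.Nat.eqb i 0 then 1 else 0)
     else Bmat dY Wst i j) (fun i j => if PeanoNat.Nat.eqb j x' then (if PeanoNat.Nat.eqb i 0 then 1 else 0)
     else (if PeanoNat.Nat.eqb i j then 1 else 0))); last first.
  { move=> i j Hi Hj. case: (PeanoNat.Nat.eqb j x') => //. by rewrite (Bmat_wit d dY HdY Hd i j Hi Hj). }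
  case: (PeanoNat.Nat.eqb_spec x' 0) => [->|Hne].
  - rewrite (det_eq_ext d (fun i j => if PeanoNat.Nat.eqb j 0 then (if PeanoNat.Nat.eqb i 0 then 1 else 0)
     else (if PeanoNat.Nat.eqb i j then 1 else 0)) (fun i j => if PeanoNat.Nat.eqb i j then 1 else 0)); first exact: det_idnat.
    move=> i j _ _. case: (PeanoNat.Nat.eqb_spec j 0) => [->|//].
    by rewrite PeanoNat.Nat.eqb_sym.
  - rewrite -det_tr. have Hd0 : (0 < d)%N by apply/ltP; lia.
    have Hx'' : (x' < d)%N by apply/ltP.
    apply: (determinant_alternate (i1 := Ordinal Hd0) (i2 := Ordinal Hx'')).
    + apply/eqP => E. apply: Hne. by case: E.
    + move=> k. rewrite !mxE /=. rewrite PeanoNat.Nat.eqb_refl.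
      by case: x' Hne {Hx' Hx''} => [|x'].
Qed.

End WitDet.

Lemma one_neq0R : (1 : R) <> 0.
Proof. exact/eqP/oner_neq0. Qed.

Section WitExpr.
Variables (d dY : nat) (HdY : (2 <= dY)%coq_nat) (Hd : (1 <= d)%coq_nat).
Variables (I : Type) (vw : nat * nat * nat -> I) (vp : nat -> I).

Lemma Wof_funext (z : I -> R) : (forall t, z (vw t) = zw t) -> Wof d dY I vw z = Wst.
Proof.
  move=> Hz. apply: functional_extensionality => y. apply: functional_extensionality => x.
  apply: functional_extensionality => x'. exact: Wof_wit.
Qed.

Lemma D1_wit z : (forall t, z (vw t) = zw t) -> eval z (D1E d dY I vw) <> 0.
Proof. move=> Hz. rewrite eval_D1E Wof_funext // (det_Rmat_wit d dY) //. exact: one_neq0R. Qed.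

Lemma D2_wit z : (forall t, z (vw t) = zw t) -> (forall x, z (vp x) = 0) -> eval z (D2E d dY I vw vp) <> 0.
Proof.
  move=> Hz Hp. rewrite eval_D2E Wof_funext // (det_Mmat_wit d dY) //; first exact: one_neq0R.
  move=> x _. exact: Pof_wit.
Qed.

Lemma DB_wit z : (forall t, z (vw t) = zw t) -> eval z (DBE d dY I vw) <> 0.
Proof. move=> Hz. rewrite eval_DBE Wof_funext // (det_Bmat_wit d dY) //. exact: one_neq0R. Qed.

Lemma D3_wit z : (forall t, z (vw t) = zw t) -> eval z (D3E d dY I vw) <> 0.
Proof.
  move=> Hz. rewrite eval_D3E Wof_funext // (det_Mmat_wit d dY) //; first exact: one_neq0R.
  move=> x Hx. exact: (cram_wit d dY).
Qed.

Lemma Esw0_wit z x' : (forall t, z (vw t) = zw t) -> (x' < d)%coq_nat -> eval z (Esw d dY I vw 0 x') <> 0.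
Proof.
  move=> Hz Hx'. rewrite eval_Esw Wof_funext // (sumW_wit d dY HdY Hd 0 x') //; first exact: one_neq0R.
Qed.

Lemma Esw1_wit z x x' : (forall t, z (vw t) = if PeanoNat.Nat.eqb (fst (fst t)) 0 then 1 else 0) ->
  (1 <= x)%coq_nat -> eval z (Esw d dY I vw x x') <> 0.
Proof.
  move=> Hz Hx. rewrite eval_Esw sumW_wit1 //; try exact: one_neq0R; lia.
Qed.

End WitExpr.

Arguments EC {I} c. Arguments EV {I} i. Arguments EA {I} a b. Arguments EM {I} a b.
Arguments eval {I} z e. Arguments occurs {I} t e. Arguments vin {I} idx e.

Section Good.
Variables (d dY : nat) (HdY : (2 <= dY)%coq_nat) (Hd : (1 <= d)%coq_nat).
Variables (I : Type) (vw : nat * nat * nat -> I) (vp : nat -> I).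
Variables (z : I -> R) (W : nat -> nat -> nat -> R).
Hypothesis HT : is_trans d dY W.
Hypothesis Hz : forall y x x', (y < dY)%coq_nat -> (x < d)%coq_nat -> (x' < d)%coq_nat ->
  ~ (y = 0%nat /\ x = 0%nat) -> z (vw (y, x, x')) = W y x x'.

Let WA := Wof_agree d dY I vw z W ltac:(lia) ltac:(lia) HT Hz.

Lemma Rmat_agree i j : (j < d)%coq_nat -> Rmat d (Wof d dY I vw z) i j = Rmat d W i j.
Proof.
  move=> Hj. apply: rsum_ext => x Hx. apply: (wm_ext d dY).
  - move=> y a b Hy Ha Hb. exact: WA.
  - exact: tword_ok.
  - exact: Hj.
Qed.

Lemma good_trivK : eval z (D1E d dY I vw) <> 0%R -> trivK d dY W.
Proof.
  move=> H. apply: trivK_of_det => //. move: H. rewrite eval_D1E.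
  rewrite (det_eq_ext d _ (Rmat d W)); first by move/eqP.
  move=> i j _ Hj. exact: Rmat_agree.
Qed.

Lemma good_fullV P : is_prob d P -> (forall x, (1 <= x)%coq_nat -> (x < d)%coq_nat -> z (vp x) = P x) ->
  eval z (D2E d dY I vw vp) <> 0%R -> fullV d dY W P.
Proof.
  move=> HP Hzp H. apply: fullV_of_det => //. move: H. rewrite eval_D2E.
  rewrite (det_eq_ext d _ (Mmat d W P)); first by move/eqP.
  move=> j i _ _. apply: rsum_ext => x' Hx'. rewrite (Pof_agree d I vp z P HP Hzp x' Hx').
  congr (_ * _)%R. apply: (wm_ext d dY).
  - move=> y a b Hy Ha Hb. exact: WA.
  - exact: repeat_ok.
  - exact: Hx'.
Qed.

Lemma sumW_agree x x' : (x < d)%coq_nat -> (x' < d)%coq_nat -> sumW dY (Wof d dY I vw z) x x' = sumW dY W x x'.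
Proof. move=> Hx Hx'. apply: rsum_ext => y Hy. exact: WA. Qed.

Lemma Bmat_agree i j : (i < d)%coq_nat -> (j < d)%coq_nat -> Bmat dY (Wof d dY I vw z) i j = Bmat dY W i j.
Proof. move=> Hi Hj. by rewrite /Bmat sumW_agree. Qed.

Lemma good_irr : (forall x x', (x < d)%coq_nat -> (x' < d)%coq_nat -> eval z (Esw d dY I vw x x') <> 0%R) ->
  irreducible d (sumW dY W).
Proof.
  move=> H. apply: irreducible_of_pos => x x' Hx Hx'.
  have := H x x' Hx Hx'. rewrite eval_Esw sumW_agree // => Hne.
  have Hle : Rle 0 (sumW dY W x x').
  { apply: rsum_nonneg => y Hy. case: HT => H1 _. exact: H1. }
  case: (Rle_lt_or_eq_dec _ _ Hle) => // E. exfalso. apply: Hne. by rewrite -E.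
Qed.

Lemma good_stat : eval z (DBE d dY I vw) <> 0%R -> eval z (D3E d dY I vw) <> 0%R ->
  forall P, stationary d dY W P -> fullV d dY W P.
Proof.
  move=> HB H3. have Hd0 : (0 < d)%coq_nat by lia.
  apply: (fullV_stat d dY W HdY Hd0).
  - move: HB. rewrite eval_DBE (det_eq_ext d _ (Bmat dY W)); first by move/eqP.
    move=> i j Hi Hj. exact: Bmat_agree.
  - have Ecram : forall x', cram d (Bmat dY (Wof d dY I vw z)) x' = cram d (Bmat dY W) x'.
    { move=> x'. rewrite /cram.
      apply: (det_eq_ext d (fun i j => if PeanoNat.Nat.eqb j x' then (if PeanoNat.Nat.eqb i 0 then 1 else 0)%R
          else Bmat dY (Wof d dY I vw z) i j) (fun i j => if PeanoNat.Nat.eqb j x' then (if PeanoNat.Nat.eqb i 0 then 1 else 0)%R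
          else Bmat dY W i j)).
      move=> i j Hi Hj. case: (PeanoNat.Nat.eqb j x') => //. exact: Bmat_agree. }
    move: H3. rewrite eval_D3E (det_eq_ext d _ (Mmat d W (cram d (Bmat dY W)))); first by move/eqP.
    move=> j i _ _. apply: rsum_ext => x' Hx'. rewrite Ecram.
    congr (_ * _)%R. apply: (wm_ext d dY).
    + move=> y a b Hy Ha Hb. exact: WA.
    + exact: repeat_ok.
    + exact: Hx'.
Qed.

End Good.

Lemma ltn_ord_lt d (a : 'I_d) : (a < d)%coq_nat.
Proof. apply/ltP. exact: ltn_ord. Qed.

End MC.
Import MC.
From Stdlib Require Import Reals List Lra Lia Arith Bool Classical.
Import ListNotations.
Open Scope R_scope.

Arguments EC {I} c. Arguments EV {I} i. Arguments EA {I} a b. Arguments EM {I} a b.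
Arguments eval {I} z e. Arguments occurs {I} t e. Arguments vin {I} idx e.
Arguments inbox {I} idx z. Arguments fnull {I} idx S.

Lemma zw_bound t : -1 <= zw t <= 1.
Proof. destruct t as [[y x] x']. unfold zw. destruct (_ && _)%bool; [lra|]. destruct (_ && _)%bool; lra. Qed.

Lemma in_pair_W d dY y x x' : (y < dY)%nat -> (x < d)%nat -> (x' < d)%nat -> ~ (y = 0%nat /\ x = 0%nat) ->
  In (inl (y, x, x')) (pair_idx d dY).
Proof. intros. unfold pair_idx. apply in_or_app. left. apply in_map. apply In_W_idx; auto. Qed.

Lemma in_pair_P d dY x : (1 <= x)%nat -> (x < d)%nat -> In (@inr (nat * nat * nat) nat x) (pair_idx d dY).
Proof. intros. unfold pair_idx. apply in_or_app. right. apply in_map. unfold P_idx. apply in_seq. lia. Qed.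

Theorem lemma5 (d dY : nat) (Hd : (1 <= d)%nat) (HdY : (2 <= dY)%nat) :
  null_set (pair_idx d dY)
    (fun z => exists W P, is_trans d dY W /\ is_prob d P /\
       agree (pair_idx d dY) z (pair_coords W P) /\
       ~ (trivK d dY W /\ fullV d dY W P))
  /\
  null_set (W_idx d dY)
    (fun z => exists W, is_trans d dY W /\
       agree (W_idx d dY) z (W_coords W) /\
       ~ (irreducible d (sumW dY W) /\ trivK d dY W /\
          forall P, stationary d dY W P -> fullV d dY W P)).
Proof.
  assert (HW0 : In (1%nat, 0%nat, 0%nat) (W_idx d dY)) by (apply In_W_idx; lia).
  split.
  - set (I1 := ((nat * nat * nat) + nat)%type).
    apply (fnull_null I1).
    { intros E. assert (In (@inl _ nat (1%nat, 0%nat, 0%nat)) (pair_idx d dY)) by (apply in_pair_W; lia).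
      rewrite E in H. destruct H. }
    set (L := [D1E d dY I1 inl; D2E d dY I1 inl inr]).
    eapply fnull_sub; [|apply (fnull_list I1 decS (pair_idx d dY) L)].
    + intros z [W [P [HT [HP [Hag Hn]]]]].
      assert (Hzw : forall y x x', (y < dY)%nat -> (x < d)%nat -> (x' < d)%nat -> ~ (y = 0%nat /\ x = 0%nat) ->
                z (inl (y, x, x')) = W y x x').
      { intros y x x' Hy Hx Hx' Hn0. rewrite (Hag _ (in_pair_W d dY y x x' Hy Hx Hx' Hn0)). reflexivity. }
      assert (Hzp : forall x, (1 <= x)%nat -> (x < d)%nat -> z (inr x) = P x).
      { intros x H1 H2. rewrite (Hag _ (in_pair_P d dY x H1 H2)). reflexivity. }
      split.
      * intros i Hi. unfold pair_idx in Hi. apply in_app_or in Hi. destruct Hi as [Hi|Hi].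
        -- apply in_map_iff in Hi. destruct Hi as [t [<- Ht]].
           destruct (W_idx_inv d dY t Ht) as [y [x [x' [-> [Hy [Hx [Hx' Hn0]]]]]]].
           rewrite Hzw by auto. pose proof (trans_bound d dY W y x x' HT Hy Hx Hx'). lra.
        -- apply in_map_iff in Hi. destruct Hi as [x [<- Hx]]. unfold P_idx in Hx. apply in_seq in Hx.
           rewrite Hzp by lia. pose proof (prob_bound d P x HP ltac:(lia)). lra.
      * destruct (classic (eval z (D1E d dY I1 inl) = 0)) as [E1|E1].
        { exists (D1E d dY I1 inl). split; [simpl; auto|auto]. }
        destruct (classic (eval z (D2E d dY I1 inl inr) = 0)) as [E2|E2].
        { exists (D2E d dY I1 inl inr). split; [simpl; auto|auto]. }
        exfalso. apply Hn. split.
        -- apply (good_trivK d dY HdY Hd I1 inl z W HT Hzw E1).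
        -- apply (good_fullV d dY HdY Hd I1 inl inr z W HT Hzw P HP Hzp E2).
    + assert (Hw : forall y x x', (y < dY)%nat -> (x < d)%nat -> (x' < d)%nat -> ~ (y = 0%nat /\ x = 0%nat) ->
                In (@inl _ nat (y, x, x')) (pair_idx d dY)) by (intros; apply in_pair_W; auto).
      assert (Hp : forall x, (1 <= x)%nat -> (x < d)%nat -> In (@inr (nat * nat * nat) nat x) (pair_idx d dY))
        by (intros; apply in_pair_P; auto).
      set (zp := fun t : I1 => match t with inl t => zw t | inr _ => 0 end).
      assert (Hzp : inbox (pair_idx d dY) zp).
      { intros [t|x] _; simpl; [apply zw_bound|lra]. }
      intros e He. simpl in He. destruct He as [<-|[<-|[]]].
      * split.
        -- unfold D1E. apply vin_detE. intros a b. apply (vin_ER d dY I1 inl inr); auto. apply ltn_ord_lt.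
        -- exists zp. split; auto. apply (D1_wit d dY HdY Hd I1 inl zp). intros; reflexivity.
      * split.
        -- unfold D2E. apply vin_detE. intros a b. apply (vin_EM2 d dY I1 inl inr); auto.
        -- exists zp. split; auto. apply (D2_wit d dY HdY Hd I1 inl inr zp); intros; reflexivity.
  - set (I2 := (nat * nat * nat)%type). set (vw := fun t : I2 => t).
    apply (fnull_null I2).
    { intros E. rewrite E in HW0. destruct HW0. }
    set (L := [D1E d dY I2 vw; DBE d dY I2 vw; D3E d dY I2 vw] ++
              map (fun p => Esw d dY I2 vw (fst p) (snd p)) (list_prod (seq 0 d) (seq 0 d))).
    eapply fnull_sub; [|apply (fnull_list I2 dec3 (W_idx d dY) L)].
    + intros z [W [HT [Hag Hn]]].
      assert (Hzw : forall y x x', (y < dY)%nat -> (x < d)%nat -> (x' < d)%nat -> ~ (y = 0%nat /\ x = 0%nat) ->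
                z (vw (y, x, x')) = W y x x').
      { intros y x x' Hy Hx Hx' Hn0. unfold vw. rewrite (Hag _ (In_W_idx d dY y x x' Hy Hx Hx' Hn0)). reflexivity. }
      split.
      * intros i Hi. destruct (W_idx_inv d dY i Hi) as [y [x [x' [-> [Hy [Hx [Hx' Hn0]]]]]]].
        replace (z (y, x, x')) with (W y x x') by (symmetry; apply (Hzw y x x'); auto).
        pose proof (trans_bound d dY W y x x' HT Hy Hx Hx'). lra.
      * apply NNPP. intros Hne.
        assert (NZ : forall e, In e L -> eval z e <> 0) by (intros e He E; apply Hne; eauto).
        apply Hn. split; [|split].
        -- apply (good_irr d dY HdY Hd I2 vw z W HT Hzw). intros x x' Hx Hx'. apply NZ.
           unfold L. apply in_or_app. right. apply in_map_iff. exists (x, x'). split; auto.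
           apply in_prod; apply in_seq; lia.
        -- apply (good_trivK d dY HdY Hd I2 vw z W HT Hzw). apply NZ. unfold L; simpl; auto.
        -- apply (good_stat d dY HdY Hd I2 vw z W HT Hzw); apply NZ; unfold L; simpl; auto.
    + assert (Hw : forall y x x', (y < dY)%nat -> (x < d)%nat -> (x' < d)%nat -> ~ (y = 0%nat /\ x = 0%nat) ->
                In (vw (y, x, x')) (W_idx d dY)) by (intros; apply In_W_idx; auto).
      assert (Hzb : inbox (W_idx d dY) zw) by (intros t _; apply zw_bound).
      intros e He. unfold L in He. apply in_app_or in He. destruct He as [He|He].
      * simpl in He. destruct He as [<-|[<-|[<-|[]]]].
        -- split.
           ++ unfold D1E. apply vin_detE. intros a b. apply (vin_ER d dY I2 vw (fun _ => vw (0,0,0)%nat)); auto.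
              apply ltn_ord_lt.
           ++ exists zw. split; auto. apply (D1_wit d dY HdY Hd I2 vw zw). intros; reflexivity.
        -- split.
           ++ unfold DBE. apply vin_detE. intros a b. apply (vin_EB d dY I2 vw (fun _ => vw (0,0,0)%nat)); auto;
                apply ltn_ord_lt.
           ++ exists zw. split; auto. apply (DB_wit d dY HdY Hd I2 vw zw). intros; reflexivity.
        -- split.
           ++ unfold D3E. apply vin_detE. intros a b t Ht. apply (occ_Esum 0%nat I2 vw (fun _ => (0,0,0)%nat)) in Ht. destruct Ht as [k [Hk [Ht|Ht]]].
              ** refine (vin_Ewm d dY I2 vw (fun _ => vw (0,0,0)%nat) (W_idx d dY) Hw _ _ k _ Hk t Ht).
                 apply repeat_ok; auto.
              ** unfold QE in Ht. revert t Ht. apply vin_detE. intros a' b'.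
                 destruct (Nat.eqb (fintype.nat_of_ord b') k).
                 --- intros t [].
                 --- apply (vin_EB d dY I2 vw (fun _ => vw (0,0,0)%nat)); auto; apply ltn_ord_lt.
           ++ exists zw. split; auto. apply (D3_wit d dY HdY Hd I2 vw zw). intros; reflexivity.
      * apply in_map_iff in He. destruct He as [[x x'] [<- Hxx]]. apply in_prod_iff in Hxx.
        destruct Hxx as [Hx Hx']. apply in_seq in Hx, Hx'. simpl. split.
        -- apply (vin_Esw d dY I2 vw (fun _ => vw (0,0,0)%nat)); auto; lia.
        -- destruct (Nat.eq_dec x 0) as [->|Hx0].
           ++ exists zw. split; auto. apply (Esw0_wit d dY HdY Hd I2 vw zw x'); [intros; reflexivity|lia].
           ++ exists (fun t : I2 => if Nat.eqb (fst (fst t)) 0 then 1 else 0). split.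
              ** intros t _. destruct (Nat.eqb _ 0); lra.
              ** apply (Esw1_wit d dY HdY Hd I2 vw _ x x'); [intros; reflexivity|lia].
Qed.
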